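(* (i) $\mathsf{Seq}$ is a sequential theory, i.e. $\mathsf{Seq}$ directly interprets the adjunctive set theory $\mathsf{AST}$. (ii) $\mathsf{Seq}$ is essentially undecidable.
   Context: $\mathsf{Seq}$ is the theory in the language $\{e,\vdash,\circ\}$ ($e$ constant, $\vdash$ and $\circ$ binary functions) with axioms: ($\mathsf{Seq}_1$) $\forall xy[x\vdash y\neq e]$; ($\mathsf{Seq}_2$) $\forall x_1x_2y_1y_2[x_1\vdash x_2=y_1\vdash y_2\rightarrow(x_1=y_1\wedge x_2=y_2)]$; ($\mathsf{Seq}_3$) $\forall x[x\circ e=x]$; ($\mathsf{Seq}_4$) $\forall xyz[x\circ(y\vdash z)=(x\circ y)\vdash z]$; ($\mathsf{Seq}_5$) $\forall x[x=e\vee\exists yz[x=y\vdash z]]$. $\mathsf{AST}$ is the theory in the language $\{\in\}$ with axioms $\exists y\forall x[x\notin y]$ (empty set) and $\forall xy\exists z\forall u[u\in z\leftrightarrow(u\in x\vee u=y)]$ (adjunction). A theory is called sequential if it directly interprets $\mathsf{AST}$ (an interpretation is direct if the domain is unrestricted and identity is translated as identity). *)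

(* Defs.v *)
From Stdlib Require Import List Arith Fin.
Import ListNotations.

Record sig := {
  Fn : Type; fn_ar : Fn -> nat;
  Rl : Type; rl_ar : Rl -> nat }.

Inductive term (S : sig) : Type :=
| tvar : nat -> term S
| tapp : forall f : Fn S, (Fin.t (fn_ar S f) -> term S) -> term S.
Arguments tvar {S} n.
Arguments tapp {S} f args.

Inductive form (S : sig) : Type :=
| fbot : form S
| feq  : term S -> term S -> form S
| frel : forall R : Rl S, (Fin.t (rl_ar S R) -> term S) -> form S
| fimp : form S -> form S -> form S
| fall : form S -> form S.             (* binds variable 0 *)
Arguments fbot {S}.
Arguments feq {S} s t.
Arguments frel {S} R args.
Arguments fimp {S} phi psi.
Arguments fall {S} phi.

Section Syntax.
Variable L : sig.

Definition fneg (p : form L) : form L := fimp p fbot.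
Definition for_ (p q : form L) : form L := fimp (fneg p) q.
Definition fand (p q : form L) : form L := fneg (fimp p (fneg q)).
Definition fiff (p q : form L) : form L := fand (fimp p q) (fimp q p).
Definition fex (p : form L) : form L := fneg (fall (fneg p)).

Fixpoint tsubst (sigma : nat -> term L) (t : term L) : term L :=
  match t with
  | tvar n => sigma n
  | tapp f args => tapp f (fun i => tsubst sigma (args i))
  end.

Definition shift : nat -> term L := fun k => tvar (S k).
Definition up (sigma : nat -> term L) : nat -> term L :=
  fun n => match n with 0 => tvar 0 | S m => tsubst shift (sigma m) end.
Definition inst (t : term L) : nat -> term L :=
  fun n => match n with 0 => t | S m => tvar m end.

Fixpoint fsubst (sigma : nat -> term L) (p : form L) : form L :=
  match p with
  | fbot => fbot
  | feq s t => feq (tsubst sigma s) (tsubst sigma t)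
  | frel R args => frel R (fun i => tsubst sigma (args i))
  | fimp p q => fimp (fsubst sigma p) (fsubst sigma q)
  | fall p => fall (fsubst (up sigma) p)
  end.

Fixpoint tbounded (n : nat) (t : term L) : Prop :=
  match t with
  | tvar k => k < n
  | tapp f args => forall i, tbounded n (args i)
  end.
Fixpoint fbounded (n : nat) (p : form L) : Prop :=
  match p with
  | fbot => True
  | feq s t => tbounded n s /\ tbounded n t
  | frel R args => forall i, tbounded n (args i)
  | fimp p q => fbounded n p /\ fbounded n q
  | fall p => fbounded (S n) p
  end.
Definition sentence (p : form L) : Prop := fbounded 0 p.

Inductive prv : list (form L) -> form L -> Prop :=
| P_ax   G p : In p G -> prv G p
| P_impI G p q : prv (p :: G) q -> prv G (fimp p q)
| P_impE G p q : prv G (fimp p q) -> prv G p -> prv G q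
| P_allI G p : prv (map (fsubst shift) G) p -> prv G (fall p)
| P_allE G p t : prv G (fall p) -> prv G (fsubst (inst t) p)
| P_dn   G p : prv G (fneg (fneg p)) -> prv G p
| P_refl G t : prv G (feq t t)
| P_leib G p s t : prv G (feq s t) -> prv G (fsubst (inst s) p) ->
                   prv G (fsubst (inst t) p).

Definition theory := form L -> Prop.
Definition proves (T : theory) (p : form L) : Prop :=
  exists G, (forall q, In q G -> T q) /\ prv G p.
Definition consistent (T : theory) : Prop := ~ proves T fbot.
End Syntax.

Arguments fneg {L} p.
Arguments for_ {L} p q.
Arguments fand {L} p q.
Arguments fiff {L} p q.
Arguments fex {L} p.
Arguments fsubst {L} sigma p.
Arguments tsubst {L} sigma t.
Arguments fbounded {L} n p.
Arguments sentence {L} p.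
Arguments proves {L} T p.
Arguments consistent {L} T.

Inductive SeqFn := Fe | Fcons | Fconc.
Definition SeqSig : sig := {|
  Fn := SeqFn;
  fn_ar := fun f => match f with Fe => 0 | _ => 2 end;
  Rl := Empty_set;
  rl_ar := fun r => match r with end |}.

Definition args2 {S : sig} (s t : term S) : Fin.t 2 -> term S :=
  fun i => match i in Fin.t n return term S with
           | Fin.F1 => s | Fin.FS _ => t end.

Definition te : term SeqSig := tapp (S := SeqSig) Fe (fun i => Fin.case0 _ i).
Definition tcons (s t : term SeqSig) : term SeqSig :=
  tapp (S := SeqSig) Fcons (args2 s t).
Definition tconc (s t : term SeqSig) : term SeqSig :=
  tapp (S := SeqSig) Fconc (args2 s t).
Definition v (n : nat) : term SeqSig := tvar n.

Definition Seq1 : form SeqSig :=           (* forall x y, x |- y <> e *)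
  fall (fall (fneg (feq (tcons (v 1) (v 0)) te))).
Definition Seq2 : form SeqSig :=           (* x1 |- x2 = y1 |- y2 -> x1 = y1 /\ x2 = y2 *)
  fall (fall (fall (fall
    (fimp (feq (tcons (v 3) (v 2)) (tcons (v 1) (v 0)))
          (fand (feq (v 3) (v 1)) (feq (v 2) (v 0))))))).
Definition Seq3 : form SeqSig :=           (* x o e = x *)
  fall (feq (tconc (v 0) te) (v 0)).
Definition Seq4 : form SeqSig :=           (* x o (y |- z) = (x o y) |- z *)
  fall (fall (fall
    (feq (tconc (v 2) (tcons (v 1) (v 0))) (tcons (tconc (v 2) (v 1)) (v 0))))).
Definition Seq5 : form SeqSig :=           (* x = e \/ exists y z, x = y |- z *)
  fall (for_ (feq (v 0) te) (fex (fex (feq (v 2) (tcons (v 1) (v 0)))))).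

Definition SeqAx : theory SeqSig :=
  fun p => p = Seq1 \/ p = Seq2 \/ p = Seq3 \/ p = Seq4 \/ p = Seq5.

Definition ASTSig : sig := {|
  Fn := Empty_set; fn_ar := fun f => match f with end;
  Rl := unit; rl_ar := fun _ => 2 |}.          (* the single binary relation "in" *)

Definition mem (a b : nat) : form ASTSig :=
  frel (S := ASTSig) tt (args2 (tvar a) (tvar b)).

Definition AST_empty : form ASTSig :=        (* exists y forall x, x notin y *)
  fex (fall (fneg (mem 0 1))).
Definition AST_adj : form ASTSig :=          (* forall x y exists z forall u, u in z <-> u in x \/ u = y *)
  fall (fall (fex (fall
    (fiff (mem 0 1) (for_ (mem 0 3) (feq (tvar 0) (tvar 2))))))).
Definition ASTAx : theory ASTSig := fun p => p = AST_empty \/ p = AST_adj.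

(* A direct interpretation is given by a formula delta(x0,x1) (free variables
   among 0,1) translating "x0 in x1"; the domain is unrestricted, identity is
   translated as identity, and the translation commutes with the logical
   connectives and quantifiers. *)
Definition tr_term (t : term ASTSig) : term SeqSig :=
  match t with
  | tvar n => tvar n
  | tapp f _ => match f with end
  end.

Fixpoint tr (delta : form SeqSig) (p : form ASTSig) : form SeqSig :=
  match p with
  | fbot => fbot
  | feq s t => feq (tr_term s) (tr_term t)
  | frel R args =>
      fsubst (fun n => match n with
                       | 0 => tr_term (args Fin.F1)
                       | 1 => tr_term (args (Fin.FS Fin.F1))
                       | _ => tvar 0 end) delta
  | fimp p q => fimp (tr delta p) (tr delta q)
  | fall p => fall (tr delta p)
  end.

Definition directly_interprets_AST (T : theory SeqSig) : Prop :=
  exists delta : form SeqSig, fbounded 2 delta /\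
    forall A, ASTAx A -> proves T (tr delta A).

Definition sequential (T : theory SeqSig) : Prop := directly_interprets_AST T.

Inductive rf : Type :=
| rZero | rSucc | rProj (i : nat)
| rComp (g : rf) (hs : list rf)
| rPrec (g h : rf)
| rMu (g : rf).

Inductive reval : rf -> list nat -> nat -> Prop :=
| ev_zero xs : reval rZero xs 0
| ev_succ x xs : reval rSucc (x :: xs) (S x)
| ev_proj i xs : reval (rProj i) xs (nth i xs 0)
| ev_comp g hs xs ys y : revals hs xs ys -> reval g ys y -> reval (rComp g hs) xs y
| ev_prec0 g h xs y : reval g xs y -> reval (rPrec g h) (0 :: xs) y
| ev_precS g h n xs y z : reval (rPrec g h) (n :: xs) y -> reval h (n :: y :: xs) z ->
    reval (rPrec g h) (S n :: xs) z
| ev_mu g xs n : reval g (n :: xs) 0 ->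
    (forall m, m < n -> exists k, reval g (m :: xs) (S k)) -> reval (rMu g) xs n
with revals : list rf -> list nat -> list nat -> Prop :=
| evs_nil xs : revals [] xs []
| evs_cons h hs xs y ys : reval h xs y -> revals hs xs ys -> revals (h :: hs) xs (y :: ys).

Definition npair (a b : nat) : nat := (a + b) * (a + b + 1) / 2 + b.
Definition enc_list (l : list nat) : nat := fold_right (fun x acc => S (npair x acc)) 0 l.
Fixpoint fin_list (n : nat) : (Fin.t n -> nat) -> list nat :=
  match n with
  | 0 => fun _ => []
  | S m => fun g => g Fin.F1 :: fin_list m (fun i => g (Fin.FS i))
  end.

Definition seqfn_code (f : SeqFn) : nat := match f with Fe => 0 | Fcons => 1 | Fconc => 2 end.

Fixpoint tcode (t : term SeqSig) : nat :=
  match t with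
  | tvar n => npair 0 n
  | tapp f args => npair 1 (npair (seqfn_code f)
                     (enc_list (fin_list _ (fun i => tcode (args i)))))
  end.

Fixpoint fcode (p : form SeqSig) : nat :=
  match p with
  | fbot => npair 0 0
  | feq s t => npair 1 (npair (tcode s) (tcode t))
  | frel R _ => match R with end
  | fimp p q => npair 2 (npair (fcode p) (fcode q))
  | fall p => npair 3 (fcode p)
  end.

Definition decidable_theory (T : theory SeqSig) : Prop :=
  exists c : rf, forall p : form SeqSig, sentence p ->
    (reval c [fcode p] 1 <-> proves T p) /\ (reval c [fcode p] 0 <-> ~ proves T p).

Definition essentially_undecidable (T0 : theory SeqSig) : Prop :=
  forall T : theory SeqSig,
    (forall p, T p -> sentence p) ->
    (forall p, T0 p -> proves T p) ->
    consistent T -> ~ decidable_theory T.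

(* Main.v *)
Require Import Defs.
From Stdlib Require Import List Arith Lia Bool FunctionalExtensionality Classical.
Import ListNotations.

Notation tm := (term SeqSig).
Notation fm := (form SeqSig).
Notation sh := (shift SeqSig).
Notation upp := (up SeqSig).
Notation ins := (inst SeqSig).
Notation pr := (prv SeqSig).

Fixpoint term_ind' (P : tm -> Prop) (Hv : forall n, P (tvar n))
  (Ha : forall f args, (forall i, P (args i)) -> P (tapp f args)) (t : tm) : P t :=
  match t with
  | tvar n => Hv n
  | tapp f args => Ha f args (fun i => term_ind' P Hv Ha (args i))
  end.

Lemma tsubst_comp (s t : nat -> tm) u :
  tsubst s (tsubst t u) = tsubst (fun n => tsubst s (t n)) u.
Proof.
  induction u using term_ind'; simpl; auto.
  f_equal. apply functional_extensionality; intro i. apply H.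
Qed.

Lemma tsubst_id u : tsubst (@tvar SeqSig) u = u.
Proof.
  induction u using term_ind'; simpl; auto.
  f_equal. apply functional_extensionality; intro i. apply H.
Qed.

Lemma tsubst_ext (s t : nat -> tm) u : (forall n, s n = t n) -> tsubst s u = tsubst t u.
Proof. intro H. replace s with t; auto. symmetry; apply functional_extensionality; auto. Qed.

Lemma up_comp (s t : nat -> tm) :
  (fun n => tsubst (upp s) (upp t n)) = upp (fun n => tsubst s (t n)).
Proof.
  apply functional_extensionality; intros [|n]; simpl; auto.
  rewrite !tsubst_comp. apply tsubst_ext. intro k. simpl. reflexivity.
Qed.

Lemma fsubst_comp (s1 s2 : nat -> tm) p :
  fsubst s1 (fsubst s2 p) = fsubst (fun n => tsubst s1 (s2 n)) p.
Proof.
  revert s1 s2; induction p; intros s1 s2; simpl; auto.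
  - rewrite !tsubst_comp; auto.
  - destruct R.
  - rewrite IHp1, IHp2; auto.
  - rewrite IHp. rewrite up_comp. auto.
Qed.

Lemma fsubst_ext (s t : nat -> tm) p : (forall n, s n = t n) -> fsubst s p = fsubst t p.
Proof. intro H. replace s with t; auto. symmetry; apply functional_extensionality; auto. Qed.

Lemma up_id : upp (@tvar SeqSig) = @tvar SeqSig.
Proof. apply functional_extensionality; intros [|n]; reflexivity. Qed.

Lemma fsubst_id p : fsubst (@tvar SeqSig) p = p.
Proof.
  induction p; simpl; auto.
  - rewrite !tsubst_id; auto.
  - destruct R.
  - rewrite IHp1, IHp2; auto.
  - rewrite up_id, IHp; auto.
Qed.

Lemma tbounded_subst n (s : nat -> tm) t :
  tbounded SeqSig n t -> (forall i, i < n -> s i = tvar i) -> tsubst s t = t.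
Proof.
  induction t using term_ind'; simpl; intros Hb Hs; auto.
  f_equal. apply functional_extensionality; intro i. apply H; auto.
Qed.

Lemma fbounded_subst (p : fm) : forall n (s : nat -> tm),
  fbounded n p -> (forall i, i < n -> s i = tvar i) -> fsubst s p = p.
Proof.
  induction p; simpl; intros n s Hb Hs; auto.
  - destruct Hb; f_equal; eapply tbounded_subst; eauto.
  - destruct R.
  - destruct Hb; f_equal; eauto.
  - f_equal. apply (IHp (S n)); auto. intros [|i] Hi; simpl; auto.
    unfold up. rewrite Hs by lia. reflexivity.
Qed.

Lemma sentence_subst (p : fm) s : sentence p -> fsubst s p = p.
Proof. intro H. eapply fbounded_subst; eauto. intros; lia. Qed.

Lemma tbounded_mono n m t : tbounded SeqSig n t -> n <= m -> tbounded SeqSig m t.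
Proof. induction t using term_ind'; simpl; intros; auto. lia. Qed.

Lemma fbounded_mono (p : fm) : forall n m, fbounded n p -> n <= m -> fbounded m p.
Proof.
  induction p; simpl; intros; auto.
  - destruct H; split; eapply tbounded_mono; eauto.
  - destruct R.
  - destruct H; split; eauto.
  - apply (IHp (S n)); auto; lia.
Qed.

Lemma args2_map (F : tm -> tm) a b :
  (fun i => F (@args2 SeqSig a b i)) = args2 (F a) (F b).
Proof.
  apply functional_extensionality; intro i.
  apply (Fin.caseS' i (fun i => F (@args2 SeqSig a b i) = args2 (F a) (F b) i)); reflexivity.
Qed.

Lemma ts_cons s a b : tsubst s (tcons a b) = tcons (tsubst s a) (tsubst s b).
Proof. unfold tcons; simpl. f_equal. apply (args2_map (tsubst s)). Qed.
Lemma ts_conc s a b : tsubst s (tconc a b) = tconc (tsubst s a) (tsubst s b).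
Proof. unfold tconc; simpl. f_equal. apply (args2_map (tsubst s)). Qed.
Lemma ts_e s : tsubst s te = te.
Proof. unfold te; simpl. f_equal. apply functional_extensionality; intro i. apply (Fin.case0 (fun i => tsubst s (Fin.case0 (fun _ : Fin.t 0 => tm) i) = Fin.case0 (fun _ : Fin.t 0 => tm) i) i). Qed.
Lemma ts_v s n : tsubst s (v n) = s n.
Proof. reflexivity. Qed.

Lemma weaken G p : pr G p -> forall G', incl G G' -> pr G' p.
Proof.
  induction 1; intros G' Hi.
  - apply P_ax; auto.
  - apply P_impI. apply IHprv. apply incl_cons; [left; auto| apply incl_tl; auto].
  - eapply P_impE; eauto.
  - apply P_allI. apply IHprv. intros q Hq. apply in_map_iff in Hq. destruct Hq as [r [<- Hr]].
    apply in_map; auto.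
  - apply P_allE; auto.
  - apply P_dn; auto.
  - apply P_refl.
  - eapply P_leib; eauto.
Qed.

Lemma inst_up s t : (fun n => tsubst s (ins t n)) = (fun n => tsubst (ins (tsubst s t)) (upp s n)).
Proof.
  apply functional_extensionality; intros [|n]; simpl; auto.
  unfold up. rewrite tsubst_comp. simpl. rewrite tsubst_id. auto.
Qed.

Lemma sh_up s : (fun n => tsubst (upp s) (sh n)) = (fun n => tsubst sh (s n)).
Proof. apply functional_extensionality; intro n; reflexivity. Qed.

Lemma prv_subst G p : pr G p -> forall sg, pr (map (fsubst sg) G) (fsubst sg p).
Proof.
  induction 1; intros sg.
  - apply P_ax. apply in_map; auto.
  - apply P_impI. apply (IHprv sg).
  - eapply P_impE; [apply (IHprv1 sg) | apply (IHprv2 sg)].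
  - simpl. apply P_allI. specialize (IHprv (upp sg)).
    rewrite map_map in *. 
    replace (map (fun x => fsubst sh (fsubst sg x)) G) with (map (fun x => fsubst (upp sg) (fsubst sh x)) G); auto.
    apply map_ext; intro q. rewrite !fsubst_comp. rewrite sh_up. auto.
  - specialize (IHprv sg). simpl in IHprv. apply P_allE with (t := tsubst sg t) in IHprv.
    rewrite !fsubst_comp in *. rewrite inst_up. auto.
  - apply P_dn. apply (IHprv sg).
  - apply P_refl.
  - specialize (IHprv1 sg); specialize (IHprv2 sg). simpl in IHprv1.
    rewrite fsubst_comp in *. rewrite inst_up in *.
    rewrite <- fsubst_comp in *. eapply P_leib; eauto.
Qed.

Opaque tcons tconc te.

Lemma ts_sh_ins u w : tsubst (ins u) (tsubst sh w) = w.
Proof. rewrite tsubst_comp. simpl. apply tsubst_id. Qed.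
Lemma fs_sh_ins u p : fsubst (ins u) (fsubst sh p) = p.
Proof. rewrite fsubst_comp. simpl. apply fsubst_id. Qed.

Hint Rewrite ts_cons ts_conc ts_e ts_sh_ins fs_sh_ins : tsimp.
Ltac tsimp := repeat (simpl; autorewrite with tsimp).
Ltac tsimp_in H := repeat (simpl in H; autorewrite with tsimp in H).

Ltac inc := let x := fresh in let Hx := fresh in intros x Hx; simpl in *; tauto.

Lemma ax G p : In p G -> pr G p.
Proof. apply P_ax. Qed.
Lemma ax0 G p : pr (p :: G) p.
Proof. apply P_ax; left; auto. Qed.
Lemma wk1 G p q : pr G p -> pr (q :: G) p.
Proof. intro H; eapply weaken; eauto. intros x Hx; right; auto. Qed.

Lemma exfalso' G p : pr G fbot -> pr G p.
Proof. intro H. apply P_dn. apply P_impI. apply wk1. auto. Qed.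
Lemma negE G p : pr G (fneg p) -> pr G p -> pr G fbot.
Proof. intros; eapply P_impE; eauto. Qed.
Lemma byContra G p : pr (fneg p :: G) fbot -> pr G p.
Proof. intro H. apply P_dn. apply P_impI. auto. Qed.

Lemma andI G p q : pr G p -> pr G q -> pr G (fand p q).
Proof.
  intros Hp Hq. apply P_impI. eapply P_impE. eapply P_impE. apply ax0. apply wk1; auto. apply wk1; auto.
Qed.
Lemma andE1 G p q : pr G (fand p q) -> pr G p.
Proof.
  intro H. apply byContra. eapply P_impE. apply wk1; apply H.
  apply P_impI. apply exfalso'. eapply P_impE. apply wk1; apply ax0. apply ax0.
Qed.
Lemma andE2 G p q : pr G (fand p q) -> pr G q.
Proof.
  intro H. apply byContra. eapply P_impE. apply wk1; apply H.
  apply P_impI. apply wk1. apply ax0.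
Qed.
Lemma orI1 G p q : pr G p -> pr G (for_ p q).
Proof. intro H. apply P_impI. apply exfalso'. eapply P_impE. apply ax0. apply wk1; auto. Qed.
Lemma orI2 G p q : pr G q -> pr G (for_ p q).
Proof. intro H. apply P_impI. apply wk1; auto. Qed.
Lemma orE G p q r : pr G (for_ p q) -> pr (p :: G) r -> pr (q :: G) r -> pr G r.
Proof.
  intros H H1 H2. apply byContra.
  assert (Hnp : pr (fneg r :: G) (fneg p)).
  { apply P_impI. eapply P_impE. apply wk1; apply ax0. apply (weaken _ _ H1).
    inc. }
  assert (Hq : pr (fneg r :: G) q). { eapply P_impE. apply wk1; apply H. auto. }
  eapply P_impE. apply ax0. apply (P_impE _ _ q r). apply P_impI. eapply weaken; [apply H2|].
  inc. auto.
Qed.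

Lemma exI G p t : pr G (fsubst (ins t) p) -> pr G (fex p).
Proof.
  intro H. apply P_impI. eapply P_impE. apply (P_allE _ _ (fneg p) t). apply ax0.
  apply wk1; auto.
Qed.
Lemma exE G p q : pr G (fex p) -> pr (p :: map (fsubst sh) G) (fsubst sh q) -> pr G q.
Proof.
  intros H1 H2. apply byContra. eapply P_impE. apply wk1; apply H1.
  apply P_allI. simpl. apply P_impI. eapply P_impE. apply wk1; apply ax0.
  eapply weaken; [apply H2|]. inc.
Qed.
Lemma allE G p t : pr G (fall p) -> pr G (fsubst (ins t) p).
Proof. apply P_allE. Qed.

Lemma eq_sym G s t : pr G (feq s t) -> pr G (feq t s).
Proof.
  intro H. assert (Hl := P_leib _ G (feq (tvar 0) (tsubst sh s)) s t H).
  simpl in Hl. rewrite !ts_sh_ins in Hl. apply Hl. apply P_refl.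
Qed.
Lemma eq_trans G s t u : pr G (feq s t) -> pr G (feq t u) -> pr G (feq s u).
Proof.
  intros H1 H2. assert (Hl := P_leib _ G (feq (tvar 0) (tsubst sh u)) t s (eq_sym _ _ _ H1)).
  simpl in Hl. rewrite !ts_sh_ins in Hl. auto.
Qed.
Lemma eq_cong G a a' C : pr G (feq a a') -> pr G (feq (tsubst (ins a) C) (tsubst (ins a') C)).
Proof.
  intro H. assert (Hl := P_leib _ G (feq (tsubst sh (tsubst (ins a) C)) C) a a' H).
  simpl in Hl. rewrite !ts_sh_ins in Hl. apply Hl. apply P_refl.
Qed.
Lemma cong_cons G a a' b b' : pr G (feq a a') -> pr G (feq b b') -> pr G (feq (tcons a b) (tcons a' b')).
Proof.
  intros H1 H2. eapply eq_trans.
  - assert (X := eq_cong _ _ _ (tcons (tvar 0) (tsubst sh b)) H1). tsimp_in X. exact X.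
  - assert (X := eq_cong _ _ _ (tcons (tsubst sh a') (tvar 0)) H2). tsimp_in X. exact X.
Qed.
Lemma cong_conc G a a' b b' : pr G (feq a a') -> pr G (feq b b') -> pr G (feq (tconc a b) (tconc a' b')).
Proof.
  intros H1 H2. eapply eq_trans.
  - assert (X := eq_cong _ _ _ (tconc (tvar 0) (tsubst sh b)) H1). tsimp_in X. exact X.
  - assert (X := eq_cong _ _ _ (tconc (tsubst sh a') (tvar 0)) H2). tsimp_in X. exact X.
Qed.
Lemma eq_refl' G t : pr G (feq t t).
Proof. apply P_refl. Qed.
Lemma leib G p s t : pr G (feq s t) -> pr G (fsubst (ins s) p) -> pr G (fsubst (ins t) p).
Proof. apply P_leib. Qed.

Definition Ax : list fm := [Seq1; Seq2; Seq3; Seq4; Seq5].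

Lemma tb_cons n a b : tbounded SeqSig n a -> tbounded SeqSig n b -> tbounded SeqSig n (tcons a b).
Proof. intros. Transparent tcons. unfold tcons; simpl. intro i. apply (Fin.caseS' i (fun i => tbounded SeqSig n (args2 a b i))); simpl; auto. Qed.
Lemma tb_conc n a b : tbounded SeqSig n a -> tbounded SeqSig n b -> tbounded SeqSig n (tconc a b).
Proof. intros. Transparent tconc. unfold tconc; simpl. intro i. apply (Fin.caseS' i (fun i => tbounded SeqSig n (args2 a b i))); simpl; auto. Qed.
Lemma tb_e n : tbounded SeqSig n te.
Proof. Transparent te. unfold te; simpl. intro i. destruct (Fin.case0 (fun _ => False) i). Qed.
Opaque tcons tconc te.
Hint Resolve tb_cons tb_conc tb_e : bnd.
Ltac bnd := unfold sentence, Seq1, Seq2, Seq3, Seq4, Seq5, fand, fneg, for_, fex, fiff in *; simpl;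
  repeat (split || apply tb_cons || apply tb_conc || apply tb_e); try (unfold v; simpl; lia); auto with bnd.

Lemma Ax_sentences : forall q, In q Ax -> sentence q.
Proof. intros q Hq; repeat destruct Hq as [<-|Hq]; try bnd; destruct Hq. Qed.

Lemma Ax_sh G : incl Ax G -> forall s, incl Ax (map (fsubst s) G).
Proof.
  intros H s q Hq. rewrite <- (sentence_subst q s) by (apply Ax_sentences; auto).
  apply in_map; auto.
Qed.

Definition AxG (G : list fm) := incl Ax G.

Lemma useAx G q : AxG G -> In q Ax -> pr G q.
Proof. intros H Hq; apply ax; auto. Qed.

Lemma S1 G a b : AxG G -> pr G (feq (tcons a b) te) -> pr G fbot.
Proof.
  intros HG H. assert (X := useAx G Seq1 HG ltac:(simpl; tauto)).
  apply (allE _ _ a) in X. apply (allE _ _ b) in X. unfold Seq1 in X. tsimp_in X.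
  eapply negE; eauto.
Qed.

Opaque tcons tconc te.

Definition scons (t : tm) (s : nat -> tm) : nat -> tm :=
  fun n => match n with 0 => t | S m => s m end.

Lemma scons_up t s : (fun n => tsubst (ins t) (upp s n)) = scons t s.
Proof. apply functional_extensionality; intros [|n]; simpl; auto. apply ts_sh_ins. Qed.

Lemma allE' G s p t : pr G (fsubst s (fall p)) -> pr G (fsubst (scons t s) p).
Proof. intro H. simpl in H. apply (allE _ _ t) in H. rewrite fsubst_comp, scons_up in H. auto. Qed.
Lemma exI' G s p t : pr G (fsubst (scons t s) p) -> pr G (fsubst s (fex p)).
Proof. intro H. change (fsubst s (fex p)) with (fex (fsubst (upp s) p)). apply (exI _ _ t).
  rewrite fsubst_comp, scons_up. auto. Qed.
Lemma pr_id G p : pr G (fsubst (@tvar SeqSig) p) -> pr G p.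
Proof. rewrite fsubst_id; auto. Qed.
Lemma pr_id' G p : pr G p -> pr G (fsubst (@tvar SeqSig) p).
Proof. rewrite fsubst_id; auto. Qed.

Lemma cut G p q : pr G p -> pr (p :: G) q -> pr G q.
Proof. intros. eapply P_impE; [apply P_impI|]; eauto. Qed.

Lemma S2 G a b c d : AxG G -> pr G (feq (tcons a b) (tcons c d)) -> pr G (feq a c) /\ pr G (feq b d).
Proof.
  intros HG H. assert (X := useAx G Seq2 HG ltac:(simpl; tauto)).
  apply pr_id' in X. unfold Seq2 in X.
  apply (allE' _ _ _ a) in X. apply (allE' _ _ _ b) in X. apply (allE' _ _ _ c) in X. apply (allE' _ _ _ d) in X.
  tsimp_in X. assert (Y := P_impE _ _ _ _ X H). split; [eapply andE1|eapply andE2]; eauto.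
Qed.
Lemma S3 G a : AxG G -> pr G (feq (tconc a te) a).
Proof.
  intros HG. assert (X := useAx G Seq3 HG ltac:(simpl; tauto)).
  apply pr_id' in X. unfold Seq3 in X. apply (allE' _ _ _ a) in X. tsimp_in X. auto.
Qed.
Lemma S4 G a b c : AxG G -> pr G (feq (tconc a (tcons b c)) (tcons (tconc a b) c)).
Proof.
  intros HG. assert (X := useAx G Seq4 HG ltac:(simpl; tauto)).
  apply pr_id' in X. unfold Seq4 in X.
  apply (allE' _ _ _ a) in X. apply (allE' _ _ _ b) in X. apply (allE' _ _ _ c) in X. tsimp_in X. auto.
Qed.

Definition lift2 (G : list fm) := map (fsubst sh) (map (fsubst sh) G).
Definition sh2 (t : tm) := tsubst sh (tsubst sh t).

Lemma AxG_lift2 G : AxG G -> AxG (lift2 G).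
Proof. intro H. unfold lift2. apply Ax_sh. apply Ax_sh. auto. Qed.

Lemma S5E G w r : AxG G -> pr (feq w te :: G) r ->
  pr (feq (sh2 w) (tcons (tvar 1) (tvar 0)) :: lift2 G) (fsubst sh (fsubst sh r)) -> pr G r.
Proof.
  intros HG H1 H2. assert (X := useAx G Seq5 HG ltac:(simpl; tauto)).
  apply pr_id' in X. unfold Seq5 in X. apply (allE' _ _ _ w) in X.
  simpl in X. eapply orE; [exact X| |].
  - simpl. rewrite ts_e. auto.
  - eapply exE. apply ax0. eapply exE. apply ax0.
    eapply weaken. apply H2. unfold lift2, sh2. intros x Hx. simpl in Hx. destruct Hx as [<-|Hx].
    + left. simpl. rewrite ts_cons. reflexivity.
    + right. right. simpl. right. auto.
Qed.

Inductive tree := L | N (a b : tree).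
Fixpoint tt (c : tree) : tm := match c with L => te | N a b => tcons (tt a) (tt b) end.
Fixpoint gl (z : tm) (cs : list tree) : tm :=
  match cs with [] => z | c :: cs => tcons (gl z cs) (tt c) end.
Definition lt (cs : list tree) := gl te cs.

Lemma tt_subst s c : tsubst s (tt c) = tt c.
Proof. induction c; simpl; tsimp; congruence. Qed.
Lemma gl_subst s z cs : tsubst s (gl z cs) = gl (tsubst s z) cs.
Proof. induction cs; simpl; auto. rewrite ts_cons, IHcs, tt_subst; auto. Qed.
Lemma lt_subst s cs : tsubst s (lt cs) = lt cs.
Proof. unfold lt. rewrite gl_subst, ts_e. auto. Qed.
Hint Rewrite tt_subst gl_subst lt_subst : tsimp.

Lemma append G s ws : AxG G -> pr G (feq (tconc s (lt ws)) (gl s ws)).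
Proof.
  intro HG. induction ws; simpl.
  - apply S3; auto.
  - unfold lt; simpl. eapply eq_trans. apply S4; auto. apply cong_cons; auto. apply eq_refl'.
Qed.

Lemma prefix l : forall G s1 s2 w r, AxG G ->
  pr G (feq (tconc (tcons s1 s2) w) (lt l)) ->
  (forall pre l', l = pre ++ l' -> l' <> [] -> pr (feq (tcons s1 s2) (lt l') :: G) r) ->
  pr G r.
Proof.
  induction l as [|c cs IH]; intros G s1 s2 w r HG H Hr.
  - apply exfalso'. eapply S5E with (w := w); auto.
    + eapply S1. intros q Hq; right; auto. eapply eq_trans. apply eq_sym.
      eapply eq_trans. apply cong_conc. apply eq_refl'. apply ax0. apply S3. intros q Hq; right; auto.
      apply wk1; eauto.
    + apply exfalso'. eapply S1. intros q Hq; right; apply AxG_lift2; auto.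
      eapply eq_trans. apply eq_sym. apply S4. intros q Hq; right; apply AxG_lift2; auto.
      eapply eq_trans. apply eq_sym. apply cong_conc. apply eq_refl'. apply ax0.
      apply wk1. assert (H' := prv_subst _ _ (prv_subst _ _ H sh) sh).
      simpl in H'. rewrite ts_conc, ts_cons, ts_conc, ts_cons in H'. unfold lt in H'. simpl in H'.
      rewrite !ts_e in H'. exact H'.
  - eapply S5E with (w := w); auto.
    + apply (cut _ (feq (tcons s1 s2) (lt (c :: cs)))). 2: (eapply weaken; [apply (Hr [] (c :: cs)); auto; discriminate| inc]).
      eapply eq_trans. apply eq_sym. apply S3. intros q Hq; right; auto.
      eapply eq_trans. apply cong_conc. apply eq_refl'. apply eq_sym. apply ax0. apply wk1; auto.
    + set (G2 := feq (sh2 w) (tcons (tvar 1) (tvar 0)) :: lift2 G).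
      assert (HG2 : AxG G2). { intros q Hq; right; apply AxG_lift2; auto. }
      assert (H' := prv_subst _ _ (prv_subst _ _ H sh) sh).
      simpl in H'. rewrite !ts_conc, !ts_cons, !lt_subst in H'.
      assert (H3 : pr G2 (feq (tcons (tconc (tcons (sh2 s1) (sh2 s2)) (tvar 1)) (tvar 0)) (lt (c :: cs)))).
      { eapply eq_trans. apply eq_sym. apply S4; auto. eapply eq_trans. apply cong_conc. apply eq_refl'.
        apply eq_sym. apply ax0. apply wk1. unfold sh2. exact H'. }
      unfold lt in H3; simpl in H3. apply S2 in H3; auto. destruct H3 as [H3 _].
      eapply (IH G2 (sh2 s1) (sh2 s2) (tvar 1)); auto.
      intros pre l' E Hne. 
      assert (X := prv_subst _ _ (prv_subst _ _ (Hr (c :: pre) l' ltac:(rewrite E; auto) Hne) sh) sh).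
      simpl in X. rewrite ts_cons, ts_cons, lt_subst in X.
      eapply weaken. exact X. unfold G2, lift2, sh2. intros x Hx. simpl in Hx. destruct Hx as [<-|Hx]; [left; rewrite lt_subst; auto|].
      right. simpl. right. auto.
Qed.

Inductive pat := PL | PN (p q : pat) | PV (i : nat).

Fixpoint pmatch (p : pat) (c : tree) : option (list (nat * tree)) :=
  match p, c with
  | PL, L => Some []
  | PV i, c => Some [(i, c)]
  | PN p q, N a b => match pmatch p a with
                      | Some m1 => match pmatch q b with Some m2 => Some (m1 ++ m2) | None => None end
                      | None => None end
  | _, _ => None
  end.

Fixpoint lookup (i : nat) (m : list (nat * tree)) : tree :=
  match m with [] => L | (j, t) :: m' => if Nat.eqb i j then t else lookup i m' end.

Fixpoint pinst (m : list (nat * tree)) (p : pat) : tree :=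
  match p with PL => L | PN p q => N (pinst m p) (pinst m q) | PV i => lookup i m end.

Fixpoint pvars (p : pat) : list nat :=
  match p with PL => [] | PN p q => pvars p ++ pvars q | PV i => [i] end.

Record rule := mkR { rk : nat; rl : pat; rr : pat }.

Fixpoint stepr (rs : list rule) (c : tree) : option tree :=
  match rs with
  | [] => None
  | r :: rs => match pmatch (rl r) c with Some m => Some (pinst m (rr r)) | None => stepr rs c end
  end.

Fixpoint compat (p q : pat) : bool :=
  match p, q with
  | PV _, _ => true | _, PV _ => true
  | PL, PL => true
  | PN p1 p2, PN q1 q2 => compat p1 q1 && compat p2 q2
  | _, _ => false
  end.

Fixpoint nooverlap (rs : list rule) : bool :=
  match rs with
  | [] => true
  | r :: rs => forallb (fun r' => negb (compat (rl r) (rl r'))) rs && nooverlap rs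
  end.

Lemma compat_match p q c m1 m2 : pmatch p c = Some m1 -> pmatch q c = Some m2 -> compat p q = true.
Proof.
  revert q c m1 m2; induction p; intros q c m1 m2 H1 H2; destruct q; simpl in *; auto;
    destruct c; try discriminate.
  destruct (pmatch p1 c1) eqn:E1; try discriminate. destruct (pmatch p2 c2) eqn:E2; try discriminate.
  destruct (pmatch q1 c1) eqn:E3; try discriminate. destruct (pmatch q2 c2) eqn:E4; try discriminate.
  erewrite IHp1, IHp2; eauto.
Qed.

Lemma stepr_rule rs r c m : nooverlap rs = true -> In r rs -> pmatch (rl r) c = Some m ->
  stepr rs c = Some (pinst m (rr r)).
Proof.
  induction rs as [|r0 rs IH]; simpl; intros Hn Hi Hm; [destruct Hi|].
  apply andb_true_iff in Hn; destruct Hn as [Hf Hn].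
  destruct Hi as [<-|Hi]. { rewrite Hm; auto. }
  destruct (pmatch (rl r0) c) eqn:E.
  - exfalso. rewrite forallb_forall in Hf. specialize (Hf r Hi).
    rewrite (compat_match _ _ _ _ _ E Hm) in Hf. discriminate.
  - auto.
Qed.

Lemma stepr_none rs r c : stepr rs c = None -> In r rs -> pmatch (rl r) c = None.
Proof.
  induction rs as [|r0 rs IH]; simpl; intros H Hi; [destruct Hi|].
  destruct (pmatch (rl r0) c) eqn:E; try discriminate.
  destruct Hi as [<-|Hi]; auto.
Qed.

Definition subl (a b : list nat) : bool := forallb (fun i => existsb (Nat.eqb i) b) a.
Fixpoint nodupb (l : list nat) : bool :=
  match l with [] => true | i :: l => negb (existsb (Nat.eqb i) l) && nodupb l end.
Definition wfr (r : rule) : bool :=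
  nodupb (pvars (rl r)) && forallb (fun i => Nat.ltb i (rk r)) (pvars (rl r)) &&
  subl (pvars (rr r)) (pvars (rl r)).

Lemma pmatch_dom p c m : pmatch p c = Some m -> map fst m = pvars p.
Proof.
  revert c m; induction p; intros c m H; destruct c; simpl in *; try discriminate;
    try (injection H as <-; reflexivity).
  destruct (pmatch p1 c1) eqn:E1; try discriminate. destruct (pmatch p2 c2) eqn:E2; try discriminate.
  injection H as <-. rewrite map_app. erewrite IHp1, IHp2; eauto.
Qed.

Lemma lookup_app_l i m1 m2 : In i (map fst m1) -> lookup i (m1 ++ m2) = lookup i m1.
Proof.
  induction m1 as [|[j t] m1 IH]; simpl; intros H; [destruct H|].
  destruct (Nat.eqb i j) eqn:E; auto. apply IH. destruct H; auto. subst. rewrite Nat.eqb_refl in E; discriminate.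
Qed.
Lemma lookup_app_r i m1 m2 : ~ In i (map fst m1) -> lookup i (m1 ++ m2) = lookup i m2.
Proof.
  induction m1 as [|[j t] m1 IH]; simpl; intros H; auto.
  destruct (Nat.eqb i j) eqn:E. apply Nat.eqb_eq in E; subst; tauto. apply IH; tauto.
Qed.

Lemma nodupb_app a b : nodupb (a ++ b) = true -> nodupb a = true /\ nodupb b = true /\ (forall i, In i a -> ~ In i b).
Proof.
  induction a as [|x a IH]; simpl; intros H; auto.
  apply andb_true_iff in H; destruct H as [H1 H2]. destruct (IH H2) as [A [B C]].
  rewrite existsb_app in H1. apply negb_true_iff in H1. apply orb_false_iff in H1. destruct H1 as [H1a H1b].
  rewrite H1a, A; simpl. repeat split; auto.
  intros i [<-|Hi] Hb; auto. 
  assert (existsb (Nat.eqb x) b = true) by (apply existsb_exists; exists x; split; auto; apply Nat.eqb_refl).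
  congruence. apply (C i); auto.
Qed.

Lemma pinst_match p c m : pmatch p c = Some m -> nodupb (pvars p) = true -> forall m', pinst (m ++ m') p = c.
Proof.
  revert c m; induction p; intros c m H Hnd m'; destruct c; simpl in *; try discriminate; auto.
  - destruct (pmatch p1 c1) eqn:E1; try discriminate. destruct (pmatch p2 c2) eqn:E2; try discriminate.
    injection H as <-. apply nodupb_app in Hnd. destruct Hnd as [A [B C]].
    rewrite <- app_assoc. f_equal; auto.
    assert (forall q, (forall i, In i (pvars q) -> ~ In i (map fst l)) ->
               pinst (l ++ l0 ++ m') q = pinst (l0 ++ m') q).
    { induction q; simpl; intros Hq; auto. f_equal; [apply IHq1|apply IHq2]; intros i Hi; apply Hq; apply in_or_app; auto.
      apply lookup_app_r. apply Hq; auto. }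
    rewrite H. apply IHp2; auto. intros i Hi Hl. erewrite pmatch_dom in Hl; eauto. apply (C i); auto.
  - injection H as <-. simpl. rewrite Nat.eqb_refl. auto.
  - injection H as <-. simpl. rewrite Nat.eqb_refl. auto.
Qed.

Lemma pinst_match' p c m : pmatch p c = Some m -> nodupb (pvars p) = true -> pinst m p = c.
Proof. intros. rewrite <- (app_nil_r m). eapply pinst_match; eauto. Qed.

Inductive steps (rs : list rule) : tree -> tree -> Prop :=
| st_refl c : steps rs c c
| st_step c c' c'' : stepr rs c = Some c' -> steps rs c' c'' -> steps rs c c''.

Lemma steps_trans rs a b c : steps rs a b -> steps rs b c -> steps rs a c.
Proof. induction 1; intros; auto. econstructor; eauto. Qed.

Fixpoint run_list (rs : list rule) (c : tree) (l : list tree) : Prop :=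
  match l with
  | [] => False
  | [x] => x = c
  | x :: ((y :: _) as l') => x = c /\ stepr rs c = Some y /\ run_list rs y l'
  end.

Opaque tcons tconc te.

Fixpoint pt (p : pat) : tm :=
  match p with PL => te | PN p q => tcons (pt p) (pt q) | PV i => tvar i end.

Definition lk (k : nat) : nat -> tm := fun i => tvar (i + k).
Definition liftn k (t : tm) := tsubst (lk k) t.

Fixpoint exn (k : nat) (p : fm) : fm := match k with 0 => p | S k => exn k (fex p) end.
Fixpoint upn (k : nat) (s : nat -> tm) : nat -> tm := match k with 0 => s | S k => upp (upn k s) end.

Fixpoint Disj (ps : list fm) : fm := match ps with [] => fbot | p :: ps => for_ p (Disj ps) end.

Definition ruleF (r : rule) (b a : tm) : fm :=
  exn (rk r) (fand (feq (liftn (rk r) b) (pt (rl r))) (feq (liftn (rk r) a) (pt (rr r)))).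
Definition StepF (rs : list rule) (b a : tm) : fm := Disj (map (fun r => ruleF r b a) rs).

Lemma fsubst_exn k : forall s p, fsubst s (exn k p) = exn k (fsubst (upn k s) p).
Proof. induction k; intros s p; simpl; auto; rewrite IHk; simpl; auto. Qed.

Lemma upn_lt k s i : i < k -> upn k s i = tvar i.
Proof.
  revert i; induction k; intros i H; [lia|]. simpl. destruct i; simpl; auto.
  try (rewrite IHk by lia; reflexivity).
Qed.
Lemma upn_ge k s i : upn k s (i + k) = liftn k (s i).
Proof.
  induction k; simpl. unfold liftn, lk. rewrite Nat.add_0_r. rewrite <- (tsubst_id (s i)) at 1.
  apply tsubst_ext; intro n; rewrite Nat.add_0_r; auto.
  rewrite <- plus_n_Sm. simpl. rewrite IHk. unfold liftn. rewrite tsubst_comp. apply tsubst_ext.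
  intro n; unfold lk; simpl. unfold shift. f_equal. lia.
Qed.
Lemma upn_liftn k s t : tsubst (upn k s) (liftn k t) = liftn k (tsubst s t).
Proof.
  unfold liftn at 1. rewrite tsubst_comp. unfold liftn. rewrite tsubst_comp.
  apply tsubst_ext. intro n. unfold lk. simpl. rewrite upn_ge. reflexivity.
Qed.
Lemma upn_pt k s p : (forall i, In i (pvars p) -> i < k) -> tsubst (upn k s) (pt p) = pt p.
Proof.
  induction p; simpl; intros H; tsimp; auto.
  - rewrite IHp1, IHp2; auto; intros; apply H; apply in_or_app; auto.
  - apply upn_lt; auto.
Qed.
Lemma liftn_tt k c : liftn k (tt c) = tt c.
Proof. apply tt_subst. Qed.

Lemma wfr_spec r : wfr r = true -> nodupb (pvars (rl r)) = true /\
  (forall i, In i (pvars (rl r)) -> i < rk r) /\ (forall i, In i (pvars (rr r)) -> In i (pvars (rl r))).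
Proof.
  unfold wfr, subl. intro H. apply andb_true_iff in H; destruct H as [H H3]. apply andb_true_iff in H; destruct H as [H1 H2].
  rewrite forallb_forall in H2, H3. repeat split; auto.
  - intros i Hi. apply Nat.ltb_lt. auto.
  - intros i Hi. specialize (H3 i Hi). apply existsb_exists in H3. destruct H3 as [j [Hj E]].
    apply Nat.eqb_eq in E; subst; auto.
Qed.

Lemma rr_vars r i : wfr r = true -> In i (pvars (rr r)) -> i < rk r.
Proof. intros H Hi. destruct (wfr_spec r H) as [_ [A B]]. auto. Qed.

Lemma fsubst_ruleF s r b a : wfr r = true -> fsubst s (ruleF r b a) = ruleF r (tsubst s b) (tsubst s a).
Proof.
  intro Hw. destruct (wfr_spec r Hw) as [_ [A B]]. unfold ruleF. rewrite fsubst_exn. simpl.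
  rewrite !upn_liftn, !upn_pt; auto.
Qed.

Lemma fsubst_Disj s ps : fsubst s (Disj ps) = Disj (map (fsubst s) ps).
Proof. induction ps; simpl; auto. rewrite IHps. auto. Qed.

Lemma fsubst_StepF s rs b a : forallb wfr rs = true -> fsubst s (StepF rs b a) = StepF rs (tsubst s b) (tsubst s a).
Proof.
  intro H. unfold StepF. rewrite fsubst_Disj, map_map. f_equal. apply map_ext_in. intros r Hr.
  apply fsubst_ruleF. rewrite forallb_forall in H; auto.
Qed.

Fixpoint sconsl (ws : list tm) (s : nat -> tm) : nat -> tm :=
  match ws with [] => s | w :: ws => scons w (sconsl ws s) end.

Lemma exnI G k : forall p s ws, length ws = k -> pr G (fsubst (sconsl ws s) p) -> pr G (fsubst s (exn k p)).
Proof.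
  induction k; intros p s ws Hl H; destruct ws as [|w ws]; simpl in Hl; try discriminate; simpl; auto.
  apply IHk with (ws := ws); auto. apply exI' with (t := w). auto.
Qed.

Lemma map_lk_S k G : map (fsubst sh) (map (fsubst (lk k)) G) = map (fsubst (lk (S k))) G.
Proof. rewrite map_map. apply map_ext. intro q. rewrite fsubst_comp. apply fsubst_ext. intro n. unfold lk. simpl. unfold shift. f_equal. lia. Qed.

Lemma exnE k : forall G p q, pr G (exn k p) -> pr (p :: map (fsubst (lk k)) G) (fsubst (lk k) q) -> pr G q.
Proof.
  induction k; intros G p q H1 H2; simpl in *.
  - assert (E : forall r, fsubst (lk 0) r = r). { intro r. rewrite <- (fsubst_id r) at 2. apply fsubst_ext. intro n; unfold lk; f_equal; lia. }
    rewrite E in H2. rewrite map_ext with (g := fun x => x) in H2 by auto. rewrite map_id in H2.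
    eapply cut; eauto.
  - eapply IHk. exact H1. eapply exE. apply ax0.
    eapply weaken. rewrite fsubst_comp. 
    replace (fun n => tsubst sh (lk k n)) with (lk (S k)) by (apply functional_extensionality; intro n; unfold lk; simpl; unfold shift; f_equal; lia).
    exact H2. simpl. rewrite map_lk_S. inc.
Qed.

Lemma DisjI G ps p : In p ps -> pr G p -> pr G (Disj ps).
Proof.
  induction ps; simpl; intros Hi H; [destruct Hi|]. destruct Hi as [<-|Hi].
  apply orI1; auto. apply orI2; auto.
Qed.
Lemma DisjE G ps r : pr G (Disj ps) -> (forall p, In p ps -> pr (p :: G) r) -> pr G r.
Proof.
  revert G; induction ps; simpl; intros G H Hr. apply exfalso'; auto.
  eapply orE; eauto. apply IHps. apply ax0. intros p Hp. eapply weaken; [apply Hr; right; exact Hp|]. inc.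
Qed.

Lemma pmatch_nd G p : AxG G -> forall c, pr G (feq (tt c) (pt p)) ->
  (pmatch p c = None -> pr G fbot) /\
  (forall m, pmatch p c = Some m -> forall i t, In (i, t) m -> pr G (feq (tvar i) (tt t))).
Proof.
  intro HG. induction p; intros c H; destruct c; simpl in *.
  - split; intros; try discriminate. injection H0 as <-. destruct H1.
  - split; intros; try discriminate. eapply S1; [exact HG| exact H].
  - split; intros; try discriminate. eapply S1; [exact HG| apply eq_sym; exact H].
  - apply S2 in H; auto. destruct H as [Ha Hb]. destruct (IHp1 _ Ha) as [A1 B1]. destruct (IHp2 _ Hb) as [A2 B2].
    split.
    + destruct (pmatch p1 c1); auto. destruct (pmatch p2 c2); auto. discriminate.
    + intros m Hm i t Hi. destruct (pmatch p1 c1) eqn:E1; try discriminate. destruct (pmatch p2 c2) eqn:E2; try discriminate.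
      injection Hm as <-. apply in_app_or in Hi. destruct Hi; eauto.
  - split; intros; try discriminate. injection H0 as <-. destruct H1 as [E|[]]. injection E as <- <-. apply eq_sym; auto.
  - split; intros; try discriminate. injection H0 as <-. destruct H1 as [E|[]]. injection E as <- <-. apply eq_sym; auto.
Qed.

Lemma AxG_cons G q : AxG G -> AxG (q :: G).
Proof. intros H x Hx; right; auto. Qed.

Lemma lookup_in i m : In i (map fst m) -> In (i, lookup i m) m.
Proof.
  induction m as [|[j t] m IH]; simpl; intros H; [destruct H|].
  destruct (Nat.eqb i j) eqn:E. apply Nat.eqb_eq in E; subst; auto. right. apply IH. destruct H; auto.
  subst. rewrite Nat.eqb_refl in E. discriminate.
Qed.

Lemma rhs_nd G q m : (forall i, In i (pvars q) -> pr G (feq (tvar i) (tt (lookup i m)))) ->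
  pr G (feq (pt q) (tt (pinst m q))).
Proof.
  induction q; simpl; intros H. apply eq_refl'.
  apply cong_cons; [apply IHq1|apply IHq2]; intros; apply H; apply in_or_app; auto.
  apply H; auto.
Qed.

Definition goodrs (rs : list rule) := nooverlap rs = true /\ forallb wfr rs = true.

Lemma StepF_fun G rs c c' a : AxG G -> goodrs rs -> stepr rs c = Some c' ->
  pr G (StepF rs (tt c) a) -> pr G (feq a (tt c')).
Proof.
  intros HG [Hno Hwf] Hs H. eapply DisjE. exact H. intros p Hp. apply in_map_iff in Hp.
  destruct Hp as [r [<- Hr]]. rewrite forallb_forall in Hwf. specialize (Hwf r Hr).
  destruct (wfr_spec r Hwf) as [Hnd [Hv Hsub]].
  unfold ruleF. eapply exnE. apply ax0. simpl. rewrite tt_subst. fold (liftn (rk r) a).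
  set (G2 := _ :: _). assert (HG2 : AxG G2). { apply AxG_cons, AxG_cons, Ax_sh; auto. }
  assert (H1 : pr G2 (feq (tt c) (pt (rl r)))). { eapply andE1. rewrite <- (liftn_tt (rk r) c). apply ax0. }
  assert (H2 : pr G2 (feq (liftn (rk r) a) (pt (rr r)))). { eapply andE2. apply ax0. }
  destruct (pmatch_nd G2 (rl r) HG2 c H1) as [A B].
  destruct (pmatch (rl r) c) as [m|] eqn:E; [|apply exfalso'; auto].
  rewrite (stepr_rule rs r c m Hno Hr E) in Hs. injection Hs as <-.
  eapply eq_trans. exact H2. apply rhs_nd. intros i Hi. apply (B m eq_refl). apply lookup_in.
  rewrite (pmatch_dom _ _ _ E); auto.
Qed.

Lemma StepF_halt G rs c a : AxG G -> stepr rs c = None -> pr G (StepF rs (tt c) a) -> pr G fbot.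
Proof.
  intros HG Hs H. eapply DisjE. exact H. intros p Hp. apply in_map_iff in Hp.
  destruct Hp as [r [<- Hr]].
  unfold ruleF. eapply exnE. apply ax0. simpl.
  set (G2 := _ :: _). assert (HG2 : AxG G2). { apply AxG_cons, AxG_cons, Ax_sh; auto. }
  assert (H1 : pr G2 (feq (tt c) (pt (rl r)))). { eapply andE1. rewrite <- (liftn_tt (rk r) c). apply ax0. }
  destruct (pmatch_nd G2 (rl r) HG2 c H1) as [A B].
  apply A. eapply stepr_none; eauto.
Qed.

Lemma stepr_some rs c c' : stepr rs c = Some c' -> exists r m, In r rs /\ pmatch (rl r) c = Some m /\ c' = pinst m (rr r).
Proof.
  induction rs as [|r rs IH]; simpl; intros H; try discriminate.
  destruct (pmatch (rl r) c) eqn:E. injection H as <-. exists r, l; auto.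
  destruct (IH H) as [r' [m [A B]]]. exists r', m; auto.
Qed.

Lemma sconsl_nth ws s i : i < length ws -> sconsl ws s i = nth i ws (tvar 0).
Proof. revert i; induction ws; simpl; intros i H; [lia|]. destruct i; simpl; auto. apply IHws. lia. Qed.

Lemma pt_inst k m p s : (forall i, In i (pvars p) -> i < k) ->
  tsubst (sconsl (map (fun i => tt (lookup i m)) (seq 0 k)) s) (pt p) = tt (pinst m p).
Proof.
  induction p; simpl; intros H; tsimp; auto.
  - rewrite IHp1, IHp2; auto; intros; apply H; apply in_or_app; auto.
  - assert (Hi : i < k) by (apply H; auto).
    rewrite sconsl_nth by (rewrite length_map, length_seq; auto).
    rewrite nth_indep with (d' := tt (lookup 0 m)) by (rewrite length_map, length_seq; auto).
    rewrite map_nth with (d := 0). rewrite seq_nth; auto.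
Qed.

Lemma StepF_intro G rs c c' : goodrs rs -> stepr rs c = Some c' -> pr G (StepF rs (tt c) (tt c')).
Proof.
  intros [Hno Hwf] Hs. destruct (stepr_some _ _ _ Hs) as [r [m [Hr [E ->]]]].
  rewrite forallb_forall in Hwf. specialize (Hwf r Hr).
  destruct (wfr_spec r Hwf) as [Hnd [Hv Hsub]].
  unfold StepF. eapply DisjI. apply in_map_iff. exists r; split; eauto.
  unfold ruleF. apply pr_id.
  apply exnI with (ws := map (fun i => tt (lookup i m)) (seq 0 (rk r))).
  rewrite length_map, length_seq; auto.
  simpl. rewrite !pt_inst; auto. unfold liftn. rewrite !tsubst_comp.
  rewrite !tt_subst. rewrite (pinst_match' _ _ _ E Hnd). apply andI; apply eq_refl'.
Qed.

Opaque tcons tconc te.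

Definition Valid rs X : fm :=
  fall (fall (fall (fall (fimp (feq (liftn 4 X) (tconc (tcons (tcons (tvar 3) (tvar 2)) (tvar 1)) (tvar 0)))
                                (StepF rs (tvar 1) (tvar 2)))))).
Definition Bot (H : tree) X : fm :=
  fall (fall (fimp (feq (liftn 2 X) (tconc (tcons te (tvar 1)) (tvar 0))) (feq (tvar 1) (tt H)))).
Definition Phi rs H I : fm :=
  fex (fand (Valid rs (tcons (tvar 0) (liftn 1 I))) (Bot H (tcons (tvar 0) (liftn 1 I)))).

Lemma liftn_subst k s t : tsubst (upn k s) (liftn k t) = liftn k (tsubst s t).
Proof. apply upn_liftn. Qed.

Lemma ts_var (s : nat -> tm) n : tsubst s (tvar n) = s n.
Proof. reflexivity. Qed.
Lemma fs_fall4 (s : nat -> tm) p : fsubst s (fall (fall (fall (fall p)))) = fall (fall (fall (fall (fsubst (upn 4 s) p)))).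
Proof. reflexivity. Qed.
Lemma fs_fall2 (s : nat -> tm) p : fsubst s (fall (fall p)) = fall (fall (fsubst (upn 2 s) p)).
Proof. reflexivity. Qed.
Lemma fs_ex (s : nat -> tm) p : fsubst s (fex p) = fex (fsubst (upn 1 s) p).
Proof. reflexivity. Qed.

Lemma fsubst_Valid s rs X : forallb wfr rs = true -> fsubst s (Valid rs X) = Valid rs (tsubst s X).
Proof.
  intro Hw. unfold Valid. rewrite fs_fall4. cbn [fsubst]. rewrite fsubst_StepF by auto.
  rewrite !ts_conc, !ts_cons, !ts_var, liftn_subst, !upn_lt by lia. reflexivity.
Qed.
Lemma fsubst_Bot s H X : fsubst s (Bot H X) = Bot H (tsubst s X).
Proof.
  unfold Bot. rewrite fs_fall2. cbn [fsubst].
  rewrite !ts_conc, !ts_cons, !ts_e, !ts_var, liftn_subst, !upn_lt, tt_subst by lia. reflexivity.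
Qed.
Lemma fsubst_Phi s rs H I : forallb wfr rs = true -> fsubst s (Phi rs H I) = Phi rs H (tsubst s I).
Proof.
  intro Hw. unfold Phi. rewrite fs_ex. cbn [fsubst]. unfold fand, fneg. cbn [fsubst]. fold (fneg (Valid rs (tcons (tvar 0) (liftn 1 I)))).
  change (fimp (Bot H (tcons (tvar 0) (liftn 1 I))) fbot) with (fneg (Bot H (tcons (tvar 0) (liftn 1 I)))).
  rewrite fsubst_Valid, fsubst_Bot by auto.
  rewrite !ts_cons, !ts_var, liftn_subst, !upn_lt by lia. reflexivity.
Qed.

Lemma liftn_scons4 X a b c d : tsubst (scons a (scons b (scons c (scons d tvar)))) (liftn 4 X) = X.
Proof.
  unfold liftn. rewrite tsubst_comp. rewrite <- (tsubst_id X) at 2. apply tsubst_ext. intro n.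
  unfold lk. replace (n + 4) with (S (S (S (S n)))) by lia. reflexivity.
Qed.
Lemma liftn_scons2 X a b : tsubst (scons a (scons b tvar)) (liftn 2 X) = X.
Proof.
  unfold liftn. rewrite tsubst_comp. rewrite <- (tsubst_id X) at 2. apply tsubst_ext. intro n.
  unfold lk. replace (n + 2) with (S (S n)) by lia. reflexivity.
Qed.

Lemma Valid_inst G rs X u a b w : forallb wfr rs = true -> pr G (Valid rs X) ->
  pr G (fimp (feq X (tconc (tcons (tcons u a) b) w)) (StepF rs b a)).
Proof.
  intros Hw H. apply pr_id' in H. unfold Valid in H.
  apply (allE' _ _ _ u) in H. apply (allE' _ _ _ a) in H. apply (allE' _ _ _ b) in H. apply (allE' _ _ _ w) in H.
  simpl in H. rewrite liftn_scons4, fsubst_StepF in H by auto. tsimp_in H. exact H.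
Qed.
Lemma Bot_inst G H X h w : pr G (Bot H X) -> pr G (fimp (feq X (tconc (tcons te h) w)) (feq h (tt H))).
Proof.
  intros Hb. apply pr_id' in Hb. unfold Bot in Hb.
  apply (allE' _ _ _ h) in Hb. apply (allE' _ _ _ w) in Hb. simpl in Hb. rewrite liftn_scons2 in Hb.
  tsimp_in Hb. exact Hb.
Qed.

Lemma StepF_rw G rs b b' a a' : forallb wfr rs = true -> pr G (feq b' b) -> pr G (feq a' a) ->
  pr G (StepF rs b' a') -> pr G (StepF rs b a).
Proof.
  intros Hw Hb Ha H.
  assert (X1 := leib G (StepF rs (tvar 0) (tsubst sh a')) _ _ Hb).
  rewrite !fsubst_StepF in X1 by auto. simpl in X1. rewrite !ts_sh_ins in X1.
  assert (X2 := leib G (StepF rs (tsubst sh b) (tvar 0)) _ _ Ha).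
  rewrite !fsubst_StepF in X2 by auto. simpl in X2. rewrite !ts_sh_ins in X2. auto.
Qed.

Lemma tree_eq_dec (a b : tree) : {a = b} + {a <> b}.
Proof. decide equality. Defined.

Lemma tt_neq G c c' : AxG G -> c <> c' -> pr G (feq (tt c) (tt c')) -> pr G fbot.
Proof.
  intro HG; revert c'; induction c; intros c' Hne H; destruct c'; simpl in *.
  - congruence.
  - eapply S1; [exact HG| apply eq_sym; exact H].
  - eapply S1; [exact HG| exact H].
  - apply S2 in H; auto. destruct H as [H1 H2].
    destruct (tree_eq_dec c1 c'1); [subst; destruct (tree_eq_dec c2 c'2); [subst; congruence|]|]; eauto.
Qed.

Opaque tcons tconc te.

Inductive Chain rs : list tree -> Prop :=
| ch1 c : Chain rs [c]
| ch2 c c' l : stepr rs c = Some c' -> Chain rs (c' :: l) -> Chain rs (c :: c' :: l).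

Lemma chain_mid rs l : Chain rs l -> forall pre x y rest, l = pre ++ x :: y :: rest -> stepr rs x = Some y.
Proof.
  induction 1; intros pre x y rest E.
  - destruct pre as [|? [|]]; simpl in E; discriminate.
  - destruct pre as [|z pre]; simpl in E. injection E as -> -> ->. auto.
    injection E as -> E. eapply IHChain; eauto.
Qed.

Lemma AxG_map G s : AxG G -> AxG (map (fsubst s) G).
Proof. intros; apply Ax_sh; auto. Qed.

Lemma fs_fand (s : nat -> tm) p q : fsubst s (fand p q) = fand (fsubst s p) (fsubst s q).
Proof. reflexivity. Qed.

Lemma liftn_lt k l : liftn k (lt l) = lt l.
Proof. apply lt_subst. Qed.

Lemma Valid_concrete G rs l : AxG G -> goodrs rs -> Chain rs l -> pr G (Valid rs (lt l)).
Proof.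
  intros HG Hg Hc. unfold Valid. apply P_allI, P_allI, P_allI, P_allI. rewrite liftn_lt.
  apply P_impI. eapply prefix with (l := l) (w := tvar 0).
  - apply AxG_cons; repeat apply AxG_map; auto.
  - apply eq_sym, ax0.
  - intros pre l' E Hne. set (G5 := _ :: _ :: _).
    assert (HG5 : AxG G5) by (apply AxG_cons, AxG_cons; repeat apply AxG_map; auto).
    destruct l' as [|c [|c' rest]]; [congruence| |].
    + apply exfalso'. unfold lt in *; simpl. assert (X : pr G5 (feq (tcons (tcons (tvar 3) (tvar 2)) (tvar 1)) (lt [c]))) by (apply ax; left; reflexivity).
      unfold lt in X; simpl in X. apply S2 in X; [|exact HG5]. destruct X as [X _]. eapply S1; eauto.
    + assert (X : pr G5 (feq (tcons (tcons (tvar 3) (tvar 2)) (tvar 1)) (lt (c :: c' :: rest)))) by (apply ax; left; reflexivity).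
      unfold lt in X; simpl in X. apply S2 in X; [|exact HG5]. destruct X as [X Hb]. apply S2 in X; [|exact HG5].
      destruct X as [_ Ha]. destruct Hg as [Hno Hwf].
      eapply StepF_rw; auto. apply eq_sym; exact Hb. apply eq_sym; exact Ha.
      apply StepF_intro. split; auto. eapply chain_mid; eauto.
Qed.

Lemma last_app_single (pre : list tree) x d : last (pre ++ [x]) d = x.
Proof. induction pre as [|a pre IH]; simpl; auto. rewrite IH. destruct pre; simpl; auto. Qed.

Lemma Bot_concrete G H l : AxG G -> l <> [] -> last l L = H -> pr G (Bot H (lt l)).
Proof.
  intros HG Hne Hl. unfold Bot. apply P_allI, P_allI. rewrite liftn_lt.
  apply P_impI. eapply prefix with (l := l) (w := tvar 0).
  - apply AxG_cons; repeat apply AxG_map; auto.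
  - apply eq_sym, ax0.
  - intros pre l' E Hne'. set (G5 := _ :: _ :: _).
    assert (HG5 : AxG G5) by (apply AxG_cons, AxG_cons; repeat apply AxG_map; auto).
    destruct l' as [|c [|c' rest]]; [congruence| |].
    + assert (X : pr G5 (feq (tcons te (tvar 1)) (lt [c]))) by (apply ax; left; reflexivity).
      unfold lt in X; simpl in X. apply S2 in X; [|exact HG5]. destruct X as [_ X].
      subst l. rewrite last_app_single in *. subst. exact X.
    + apply exfalso'. assert (X : pr G5 (feq (tcons te (tvar 1)) (lt (c :: c' :: rest)))) by (apply ax; left; reflexivity).
      unfold lt in X; simpl in X. apply S2 in X; [|exact HG5]. destruct X as [X _].
      eapply S1; [exact HG5| apply eq_sym; exact X].
Qed.

Theorem A_case G rs H0 c0 l' : AxG G -> goodrs rs -> Chain rs (c0 :: l') -> last (c0 :: l') L = H0 ->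
  pr G (Phi rs H0 (tt c0)).
Proof.
  intros HG Hg Hc Hl. unfold Phi. apply (exI _ _ (lt l')). rewrite fs_fand.
  destruct Hg as [Hno Hwf] eqn:Hg'. rewrite fsubst_Valid, fsubst_Bot by auto.
  rewrite !ts_cons. simpl. unfold liftn. rewrite !tsubst_comp, tt_subst.
  apply andI.
  - change (tcons (lt l') (tt c0)) with (lt (c0 :: l')). apply Valid_concrete; auto.
  - change (tcons (lt l') (tt c0)) with (lt (c0 :: l')). apply Bot_concrete; auto. discriminate.
Qed.

Lemma gl_app z P c : gl z (P ++ [c]) = gl (tcons z (tt c)) P.
Proof. induction P; simpl; auto. rewrite IHP; auto. Qed.

Lemma gl_cong G z z' P : pr G (feq z z') -> pr G (feq (gl z P) (gl z' P)).
Proof. intro H. induction P; simpl; auto. apply cong_cons; auto. apply eq_refl'. Qed.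

Lemma claimB rs H0 (Hg : goodrs rs) R : forall P c G X z, Chain rs (c :: R) -> stepr rs (last (c :: R) L) = None ->
  (forall d, In d (P ++ c :: R) -> d <> H0) -> AxG G -> pr G (Valid rs X) -> pr G (Bot H0 X) ->
  pr G (feq X (gl z (P ++ [c]))) -> pr G fbot.
Proof.
  destruct Hg as [Hno Hwf].
  induction R as [|c1 R IH]; intros P c G X z Hc Hend Hd HG HV HB HX;
  (eapply S5E with (w := z); auto;
  [
      eapply tt_neq with (c := c) (c' := H0); [apply AxG_cons; auto| apply Hd; apply in_or_app; simpl; auto|];
      eapply P_impE; [apply Bot_inst with (w := lt P); apply wk1; exact HB|];
      eapply eq_trans; [apply wk1; exact HX|]; eapply eq_trans; [| apply eq_sym, append; apply AxG_cons; auto];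
      rewrite gl_app; apply gl_cong; apply cong_cons; [apply ax0| apply eq_refl']
  | ]);
  (set (G2 := feq (sh2 z) (tcons (tvar 1) (tvar 0)) :: lift2 G);
   assert (HG2 : AxG G2) by (apply AxG_cons, AxG_lift2; auto);
   assert (HV2 : pr G2 (Valid rs (sh2 X))) by
     (apply wk1; unfold lift2, sh2; rewrite <- !fsubst_Valid by auto; apply prv_subst, prv_subst; auto);
   assert (HB2 : pr G2 (Bot H0 (sh2 X))) by
     (apply wk1; unfold lift2, sh2; rewrite <- !fsubst_Bot by auto; apply prv_subst, prv_subst; auto);
   assert (HX2 : pr G2 (feq (sh2 X) (gl (sh2 z) (P ++ [c])))) by
     (apply wk1; unfold lift2, sh2; rewrite <- (gl_subst sh), <- (gl_subst sh);
      apply (prv_subst _ _ (prv_subst _ _ HX sh) sh));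
   assert (HS : pr G2 (StepF rs (tt c) (tvar 0))) by
     (eapply P_impE; [apply Valid_inst with (X := sh2 X) (u := tvar 1) (a := tvar 0) (b := tt c) (w := lt P); [auto| exact HV2]|];
      eapply eq_trans; [exact HX2|]; eapply eq_trans; [| apply eq_sym, append; auto];
      rewrite gl_app; apply gl_cong; apply cong_cons; [apply ax0| apply eq_refl'])).
  - apply exfalso'. eapply StepF_halt; eauto.
  - inversion Hc as [|? ? ? Hst Hc1]; subst.
    assert (Ha : pr G2 (feq (tvar 0) (tt c1))) by (eapply StepF_fun; eauto; split; auto).
    apply exfalso'. apply (IH (P ++ [c]) c1 G2 (sh2 X) (tvar 1)); auto.
    + intros d Hdd. apply Hd. rewrite <- app_assoc in Hdd. exact Hdd.
    + eapply eq_trans; [exact HX2|]. rewrite !gl_app. apply gl_cong.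
      eapply eq_trans. apply cong_cons. apply ax0. apply eq_refl'. apply cong_cons; [apply cong_cons; [apply eq_refl'| exact Ha]| apply eq_refl'].
Qed.

Theorem B_case G rs H0 c0 l' : AxG G -> goodrs rs -> Chain rs (c0 :: l') ->
  stepr rs (last (c0 :: l') L) = None -> (forall d, In d (c0 :: l') -> d <> H0) ->
  pr G (fneg (Phi rs H0 (tt c0))).
Proof.
  intros HG Hg Hc Hl Hd. apply P_impI. eapply exE. apply ax0. change (fsubst sh fbot) with (@fbot SeqSig).
  assert (HG2 : AxG (fand (Valid rs (tcons (tvar 0) (liftn 1 (tt c0)))) (Bot H0 (tcons (tvar 0) (liftn 1 (tt c0))))
     :: map (fsubst sh) (Phi rs H0 (tt c0) :: G))) by (apply AxG_cons, AxG_map, AxG_cons; auto).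
  rewrite liftn_tt in *.
  apply (claimB rs H0 Hg l' [] c0 _ (tcons (tvar 0) (tt c0)) (tvar 0)); auto.
  - eapply andE1; apply ax0.
  - eapply andE2; apply ax0.
  - apply eq_refl'.
Qed.

Fixpoint num (n : nat) : tree := match n with 0 => L | S n => N (num n) L end.
Fixpoint ptree (t : tree) : pat := match t with L => PL | N a b => PN (ptree a) (ptree b) end.

Definition cfg k x := N (num k) x.
Definition pcfg k x := PN (ptree (num k)) x.

Definition Ev f xs K := cfg 0 (N f (N xs K)).
Definition Evs hs xs K := cfg 1 (N hs (N xs K)).
Definition Rt y K := cfg 2 (N y K).
Definition Pj i xs K := cfg 3 (N i (N xs K)).
Definition Dc m K := cfg 4 (N m K).
Definition Up k a b K := cfg 5 (N k (N a (N b K))).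
Definition F1 hs xs K := cfg 0 (N hs (N xs K)).
Definition F2 y K := cfg 1 (N y K).
Definition FC g K := cfg 2 (N g K).
Definition FP h n xs K := cfg 3 (N h (N n (N xs K))).
Definition FM g n xs K := cfg 4 (N g (N n (N xs K))).
Definition FD1 b K := cfg 5 (N b K).
Definition FD2 a K := cfg 6 (N a K).
Definition FS m := cfg 7 m.

Definition pEv f xs K := pcfg 0 (PN f (PN xs K)).
Definition pEvs hs xs K := pcfg 1 (PN hs (PN xs K)).
Definition pRt y K := pcfg 2 (PN y K).
Definition pPj i xs K := pcfg 3 (PN i (PN xs K)).
Definition pDc m K := pcfg 4 (PN m K).
Definition pUp k a b K := pcfg 5 (PN k (PN a (PN b K))).
Definition pF1 hs xs K := pcfg 0 (PN hs (PN xs K)).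
Definition pF2 y K := pcfg 1 (PN y K).
Definition pFC g K := pcfg 2 (PN g K).
Definition pFP h n xs K := pcfg 3 (PN h (PN n (PN xs K))).
Definition pFM g n xs K := pcfg 4 (PN g (PN n (PN xs K))).
Definition pFD1 b K := pcfg 5 (PN b K).
Definition pFD2 a K := pcfg 6 (PN a K).
Definition pFS m := pcfg 7 m.

Notation V := PV.
Definition r1 := mkR 2 (pEv (pcfg 0 PL) (V 0) (V 1)) (pRt PL (V 1)).
Definition r2 := mkR 3 (pEv (pcfg 1 PL) (PN (V 0) (V 1)) (V 2)) (pRt (PN (V 0) PL) (V 2)).
Definition r3 := mkR 3 (pEv (pcfg 2 (V 0)) (V 1) (V 2)) (pPj (V 0) (V 1) (V 2)).
Definition r4 := mkR 3 (pPj PL (PN (V 0) (V 1)) (V 2)) (pRt (V 0) (V 2)).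
Definition r5 := mkR 1 (pPj PL PL (V 0)) (pRt PL (V 0)).
Definition r6 := mkR 4 (pPj (PN (V 0) PL) (PN (V 1) (V 2)) (V 3)) (pPj (V 0) (V 2) (V 3)).
Definition r7 := mkR 2 (pPj (PN (V 0) PL) PL (V 1)) (pRt PL (V 1)).
Definition r8 := mkR 4 (pEv (pcfg 3 (PN (V 0) (V 1))) (V 2) (V 3)) (pEvs (V 1) (V 2) (pFC (V 0) (V 3))).
Definition r9 := mkR 2 (pEvs PL (V 0) (V 1)) (pRt PL (V 1)).
Definition r10 := mkR 4 (pEvs (PN (V 0) (V 1)) (V 2) (V 3)) (pEv (V 0) (V 2) (pF1 (V 1) (V 2) (V 3))).
Definition r11 := mkR 4 (pRt (V 0) (pF1 (V 1) (V 2) (V 3))) (pEvs (V 1) (V 2) (pF2 (V 0) (V 3))).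
Definition r12 := mkR 3 (pRt (V 0) (pF2 (V 1) (V 2))) (pRt (PN (V 1) (V 0)) (V 2)).
Definition r13 := mkR 3 (pRt (V 0) (pFC (V 1) (V 2))) (pEv (V 1) (V 0) (V 2)).
Definition r14 := mkR 4 (pEv (pcfg 4 (PN (V 0) (V 1))) (PN PL (V 2)) (V 3)) (pEv (V 0) (V 2) (V 3)).
Definition r15 := mkR 5 (pEv (pcfg 4 (PN (V 0) (V 1))) (PN (PN (V 2) PL) (V 3)) (V 4))
                        (pEv (pcfg 4 (PN (V 0) (V 1))) (PN (V 2) (V 3)) (pFP (V 1) (V 2) (V 3) (V 4))).
Definition r16 := mkR 5 (pRt (V 0) (pFP (V 1) (V 2) (V 3) (V 4))) (pEv (V 1) (PN (V 2) (PN (V 0) (V 3))) (V 4)).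
Definition r17 := mkR 3 (pEv (pcfg 5 (V 0)) (V 1) (V 2)) (pEv (V 0) (PN PL (V 1)) (pFM (V 0) PL (V 1) (V 2))).
Definition r18 := mkR 4 (pRt PL (pFM (V 0) (V 1) (V 2) (V 3))) (pRt (V 1) (V 3)).
Definition r19 := mkR 5 (pRt (PN (V 0) PL) (pFM (V 1) (V 2) (V 3) (V 4)))
                        (pEv (V 1) (PN (PN (V 2) PL) (V 3)) (pFM (V 1) (PN (V 2) PL) (V 3) (V 4))).
Definition r20 := mkR 1 (pDc PL (V 0)) (pRt PL (V 0)).
Definition r21 := mkR 2 (pDc (PN (V 0) PL) (V 1)) (pUp (V 0) PL PL (V 1)).
Definition r22 := mkR 3 (pUp PL (V 0) (V 1) (V 2)) (pDc (V 0) (pFD1 (V 1) (V 2))).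
Definition r23 := mkR 4 (pUp (PN (V 0) PL) (PN (V 1) PL) (V 2) (V 3)) (pUp (V 0) (V 1) (PN (V 2) PL) (V 3)).
Definition r24 := mkR 3 (pUp (PN (V 0) PL) PL (V 1) (V 2)) (pUp (V 0) (PN (V 1) PL) PL (V 2)).
Definition r25 := mkR 3 (pRt (V 0) (pFD1 (V 1) (V 2))) (pDc (V 1) (pFD2 (V 0) (V 2))).
Definition r26 := mkR 3 (pRt (V 0) (pFD2 (V 1) (V 2))) (pRt (PN (V 1) (V 0)) (V 2)).
Definition r27 := mkR 2 (pRt (V 0) (pFS (V 1))) (pEv (V 0) (PN (V 1) PL) PL).

Definition rules := [r1;r2;r3;r4;r5;r6;r7;r8;r9;r10;r11;r12;r13;r14;r15;r16;r17;r18;r19;r20;r21;r22;r23;r24;r25;r26;r27].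

Lemma rules_good : goodrs rules.
Proof. unfold goodrs; split; vm_compute; try reflexivity. Qed.

Lemma one r c m c'' : In r rules -> pmatch (rl r) c = Some m -> steps rules (pinst m (rr r)) c'' -> steps rules c c''.
Proof. intros Hi Hm H. destruct rules_good as [A B]. eapply st_step; [apply stepr_rule; eauto | exact H]. Qed.

Ltac st r := eapply (one r); [simpl; tauto | reflexivity | simpl].

Fixpoint Ln (xs : list nat) : tree := match xs with [] => L | x :: xs => N (num x) (Ln xs) end.

Lemma simProj i : forall xs K, steps rules (Pj (num i) (Ln xs) K) (Rt (num (nth i xs 0)) K).
Proof.
  induction i; intros [|x xs] K; simpl.
  - st r5. constructor.
  - st r4. constructor.
  - st r7. constructor.
  - st r6. apply IHi.
Qed.

Fixpoint Tp (f : rf) : tree :=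
  match f with
  | rZero => cfg 0 L
  | rSucc => cfg 1 L
  | rProj i => cfg 2 (num i)
  | rComp g hs => cfg 3 (N (Tp g) ((fix Tl (l : list rf) : tree :=
                                   match l with [] => L | h :: l => N (Tp h) (Tl l) end) hs))
  | rPrec g h => cfg 4 (N (Tp g) (Tp h))
  | rMu g => cfg 5 (Tp g)
  end.
Fixpoint Tl (l : list rf) : tree := match l with [] => L | h :: l => N (Tp h) (Tl l) end.

Lemma T_comp g hs : Tp (rComp g hs) = cfg 3 (N (Tp g) (Tl hs)).
Proof. reflexivity. Qed.

Lemma mu_loop g xs K n :
  (forall K', steps rules (Ev (Tp g) (Ln (n :: xs)) K') (Rt (num 0) K')) ->
  (forall j, j < n -> exists k, forall K', steps rules (Ev (Tp g) (Ln (j :: xs)) K') (Rt (num (S k)) K')) ->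
  forall d j, j + d = n -> steps rules (Ev (Tp g) (Ln (j :: xs)) (FM (Tp g) (num j) (Ln xs) K)) (Rt (num n) K).
Proof.
  intros H0 Hlt d. induction d; intros j Hj.
  - rewrite Nat.add_0_r in Hj. subst j. eapply steps_trans. apply H0. st r18. constructor.
  - destruct (Hlt j ltac:(lia)) as [k Hk]. eapply steps_trans. apply Hk. st r19.
    apply (IHd (S j)). lia.
Qed.

Fixpoint simE f xs y (H : reval f xs y) {struct H} :
  forall K, steps rules (Ev (Tp f) (Ln xs) K) (Rt (num y) K)
with simEs hs xs ys (H : revals hs xs ys) {struct H} :
  forall K, steps rules (Evs (Tl hs) (Ln xs) K) (Rt (Ln ys) K).
Proof.
  - destruct H; intro K.
    + st r1. constructor.
    + st r2. constructor.
    + st r3. apply simProj.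
    + rewrite T_comp. st r8. eapply steps_trans. apply (simEs _ _ _ H). st r13. apply (simE _ _ _ H0).
    + simpl. st r14. apply (simE _ _ _ H).
    + simpl. st r15. eapply steps_trans. apply (simE _ _ _ H). st r16. apply (simE _ _ _ H0).
    + assert (Hall : forall j, j < n -> exists k, forall K', steps rules (Ev (Tp g) (Ln (j :: xs)) K') (Rt (num (S k)) K')).
      { intros j Hj. destruct (H0 j Hj) as [k Hk]. exists k. exact (simE _ _ _ Hk). }
      assert (H0' := simE _ _ _ H).
      simpl. st r17. apply (mu_loop g xs K n H0' Hall n 0). lia.
  - destruct H; intro K.
    + st r9. constructor.
    + simpl. st r10. eapply steps_trans. apply (simE _ _ _ H). st r11.
      eapply steps_trans. apply (simEs _ _ _ H0). st r12. constructor.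
Qed.

Definition tri (s : nat) := s * (s + 1) / 2.

Lemma tri_S s : tri (S s) = tri s + S s.
Proof.
  unfold tri. replace (S s * (S s + 1)) with (s * (s + 1) + S s * 2) by lia.
  rewrite Nat.div_add by lia. reflexivity.
Qed.
Lemma npair_tri a b : npair a b = tri (a + b) + b.
Proof. reflexivity. Qed.
Lemma tri_mono s s' : s <= s' -> tri s <= tri s'.
Proof. induction 1; auto. rewrite tri_S; lia. Qed.

Lemma npair_inj a b a' b' : npair a b = npair a' b' -> a = a' /\ b = b'.
Proof.
  rewrite !npair_tri. intro E.
  assert (a + b = a' + b').
  { destruct (Nat.lt_trichotomy (a + b) (a' + b')) as [H|[H|H]]; auto; exfalso.
    - assert (tri (S (a + b)) <= tri (a' + b')) by (apply tri_mono; lia). rewrite tri_S in H0. lia.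
    - assert (tri (S (a' + b')) <= tri (a + b)) by (apply tri_mono; lia). rewrite tri_S in H0. lia. }
  rewrite H in E. lia.
Qed.

Definition succp (p : nat * nat) : nat * nat :=
  match p with (0, b) => (S b, 0) | (S a, b) => (a, S b) end.
Fixpoint iterp (k : nat) (p : nat * nat) : nat * nat :=
  match k with 0 => p | S k => iterp k (succp p) end.

Lemma npair_succp p : npair (fst (succp p)) (snd (succp p)) = S (npair (fst p) (snd p)).
Proof.
  destruct p as [[|a] b]; simpl; rewrite !npair_tri.
  - rewrite !Nat.add_0_r. simpl. rewrite tri_S. lia.
  - replace (a + S b) with (S a + b) by lia. lia.
Qed.
Lemma npair_iterp k : forall p, npair (fst (iterp k p)) (snd (iterp k p)) = npair (fst p) (snd p) + k.
Proof. induction k; intros p; simpl; auto. rewrite IHk, npair_succp. lia. Qed.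

Lemma up_loop k : forall a b K,
  steps rules (Up (num k) (num a) (num b) K) (Up (num 0) (num (fst (iterp k (a, b)))) (num (snd (iterp k (a, b)))) K).
Proof.
  induction k; intros a b K; simpl. constructor.
  destruct a.
  - st r24. apply (IHk (S b) 0).
  - st r23. apply (IHk a (S b)).
Qed.

Fixpoint etree (t : tree) : nat := match t with L => 0 | N a b => S (npair (etree a) (etree b)) end.

Lemma decode t : forall K, steps rules (Dc (num (etree t)) K) (Rt t K).
Proof.
  induction t as [|a IHa b IHb]; intros K; simpl.
  - st r20. constructor.
  - st r21. eapply steps_trans. apply (up_loop _ 0 0).
    assert (E := npair_iterp (npair (etree a) (etree b)) (0, 0)). simpl in E.
    destruct (iterp (npair (etree a) (etree b)) (0, 0)) as [a' b'] eqn:Ei. simpl in E.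
    assert (npair a' b' = npair (etree a) (etree b)) by (rewrite E; lia).
    apply npair_inj in H. destruct H as [-> ->]. simpl.
    st r22. eapply steps_trans. apply IHa. st r25. eapply steps_trans. apply IHb. st r26. constructor.
Qed.

Definition init (m : nat) := Dc (num m) (FS (num m)).
Definition H0t := Rt (num 0) L.
Definition H1t := Rt (num 1) L.

Lemma run q y : reval q [etree (Tp q)] y -> steps rules (init (etree (Tp q))) (Rt (num y) L).
Proof.
  intro H. unfold init. eapply steps_trans. apply decode. st r27.
  apply (simE _ _ _ H L).
Qed.

Lemma steps_chain rs c c' : steps rs c c' -> exists l, Chain rs (c :: l) /\ last (c :: l) L = c'.
Proof.
  induction 1. exists []; split; auto. constructor.
  destruct IHsteps as [l [Hc Hl]]. exists (c' :: l). split. constructor; auto. simpl in *. destruct l; auto.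
Qed.

Lemma H0_halt : stepr rules H0t = None.
Proof. reflexivity. Qed.
Lemma H1_halt : stepr rules H1t = None.
Proof. reflexivity. Qed.

Lemma chain_nonhalt rs l : Chain rs l -> forall d, In d l -> d <> last l L -> stepr rs d <> None.
Proof.
  induction 1; intros d Hd Hne; simpl in *.
  - destruct Hd as [<-|[]]; congruence.
  - destruct Hd as [<-|Hd]. congruence. apply IHChain; auto.
Qed.

Fixpoint cst (k : nat) : rf := match k with 0 => rZero | S k => rComp rSucc [cst k] end.
Lemma cst_ok k xs : reval (cst k) xs k.
Proof. induction k; simpl. constructor. econstructor. econstructor; eauto. constructor. constructor. Qed.

Definition addP := rPrec (rProj 0) (rComp rSucc [rProj 1]).
Lemma addP_ok a b xs : reval addP (a :: b :: xs) (a + b).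
Proof.
  induction a; simpl.
  - apply ev_prec0. apply (ev_proj 0 (b :: xs)).
  - eapply ev_precS. exact IHa. econstructor. econstructor. apply (ev_proj 1 (a :: (a + b) :: b :: xs)). constructor.
    simpl. constructor.
Qed.

Definition triP := rPrec rZero (rComp addP [rComp rSucc [rProj 0]; rProj 1]).
Lemma triP_ok s xs : reval triP (s :: xs) (tri s).
Proof.
  induction s.
  - apply ev_prec0. replace (tri 0) with 0 by reflexivity. constructor.
  - eapply ev_precS. exact IHs. rewrite tri_S.
    econstructor. econstructor. econstructor. econstructor. apply (ev_proj 0 (s :: tri s :: xs)). constructor.
    simpl. constructor. econstructor. apply (ev_proj 1 (s :: tri s :: xs)). constructor.
    simpl. replace (tri s + S s) with (S s + tri s) by lia. apply addP_ok.
Qed.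

Lemma comp1 g h xs v y : reval h xs v -> reval g [v] y -> reval (rComp g [h]) xs y.
Proof. intros. econstructor; eauto. econstructor; eauto. constructor. Qed.
Lemma comp2 g h1 h2 xs v1 v2 y : reval h1 xs v1 -> reval h2 xs v2 -> reval g [v1; v2] y -> reval (rComp g [h1; h2]) xs y.
Proof. intros. econstructor; eauto. econstructor; eauto. econstructor; eauto. constructor. Qed.
Lemma proj_ok i xs v : nth i xs 0 = v -> reval (rProj i) xs v.
Proof. intros <-. constructor. Qed.

Definition npairP := rComp addP [rComp triP [rComp addP [rProj 0; rProj 1]]; rProj 1].
Lemma npairP_ok a b xs : reval npairP (a :: b :: xs) (npair a b).
Proof.
  rewrite npair_tri. eapply comp2.
  - eapply comp1. eapply comp2. apply proj_ok; reflexivity. apply proj_ok; reflexivity. apply addP_ok. apply triP_ok.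
  - apply proj_ok; reflexivity.
  - apply addP_ok.
Qed.

Definition pairC h1 h2 := rComp npairP [h1; h2].
Lemma pairC_ok h1 h2 xs v1 v2 : reval h1 xs v1 -> reval h2 xs v2 -> reval (pairC h1 h2) xs (npair v1 v2).
Proof. intros. econstructor. econstructor; eauto. econstructor; eauto. constructor. apply npairP_ok. Qed.
Definition sucC h := rComp rSucc [h].
Lemma sucC_ok h xs v : reval h xs v -> reval (sucC h) xs (S v).
Proof. intros. econstructor. econstructor; eauto. constructor. constructor. Qed.
Definition enc2 h1 h2 := sucC (pairC h1 (sucC (pairC h2 (cst 0)))).
Lemma enc2_ok h1 h2 xs v1 v2 : reval h1 xs v1 -> reval h2 xs v2 -> reval (enc2 h1 h2) xs (enc_list [v1; v2]).
Proof. intros. simpl. apply sucC_ok, pairC_ok; auto. apply sucC_ok, pairC_ok; auto. apply cst_ok. Qed.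

Definition cTapp (f : SeqFn) : (Fin.t (fn_ar SeqSig f) -> rf) -> rf :=
  match f with
  | Fe => fun _ => cst (npair 1 (npair 0 0))
  | Fcons => fun a => pairC (cst 1) (pairC (cst 1) (enc2 (a Fin.F1) (a (Fin.FS Fin.F1))))
  | Fconc => fun a => pairC (cst 1) (pairC (cst 2) (enc2 (a Fin.F1) (a (Fin.FS Fin.F1))))
  end.

Fixpoint cT (d : nat) (hp : rf) (t : tm) : rf :=
  match t with
  | tvar i => if i <? d then cst (npair 0 i) else if i =? d then hp else cst (npair 0 (i - 1))
  | tapp f args => cTapp f (fun i => cT d hp (args i))
  end.

Fixpoint cF (d : nat) (hp : rf) (p : fm) : rf :=
  match p with
  | fbot => cst (npair 0 0)
  | feq s t => pairC (cst 1) (pairC (cT d hp s) (cT d hp t))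
  | frel R _ => match R with end
  | fimp p q => pairC (cst 2) (pairC (cF d hp p) (cF d hp q))
  | fall p => pairC (cst 3) (cF (S d) hp p)
  end.

Lemma upn_ins_lt d Nt i : i < d -> upn d (ins Nt) i = tvar i.
Proof. apply upn_lt. Qed.
Lemma upn_ins_eq d c : upn d (ins (tt c)) d = tt c.
Proof. replace d with (0 + d) at 2 by lia. rewrite upn_ge. apply liftn_tt. Qed.
Lemma upn_ins_gt d Nt i : d < i -> upn d (ins Nt) i = tvar (i - 1).
Proof.
  intro H. replace i with ((i - d) + d) at 1 by lia. rewrite upn_ge.
  destruct (i - d) eqn:E; [lia|]. simpl. unfold liftn, lk. simpl. f_equal. lia.
Qed.

Lemma cT_ok d hp c xs t : reval hp xs (tcode (tt c)) ->
  reval (cT d hp t) xs (tcode (tsubst (upn d (ins (tt c))) t)).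
Proof.
  intro Hh. induction t using term_ind'.
  - simpl. destruct (n <? d) eqn:E1. apply Nat.ltb_lt in E1. rewrite upn_ins_lt by auto. apply cst_ok.
    destruct (n =? d) eqn:E2. apply Nat.eqb_eq in E2. subst. rewrite upn_ins_eq. auto.
    apply Nat.ltb_ge in E1. apply Nat.eqb_neq in E2. rewrite upn_ins_gt by lia. apply cst_ok.
  - change (cT d hp (tapp f args)) with (cTapp f (fun i => cT d hp (args i))). destruct f; cbn [cTapp].
    + apply cst_ok.
    + apply pairC_ok. apply cst_ok. apply pairC_ok. apply cst_ok. apply enc2_ok; apply H.
    + apply pairC_ok. apply cst_ok. apply pairC_ok. apply cst_ok. apply enc2_ok; apply H.
Qed.

Lemma cF_ok hp c xs p : reval hp xs (tcode (tt c)) -> forall d,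
  reval (cF d hp p) xs (fcode (fsubst (upn d (ins (tt c))) p)).
Proof.
  intro Hh. induction p; intro d; cbn [cF fsubst fcode].
  - apply (cst_ok (npair 0 0)).
  - apply pairC_ok. apply cst_ok. apply pairC_ok; apply cT_ok; auto.
  - destruct R.
  - apply pairC_ok. apply cst_ok. apply pairC_ok; auto.
  - apply pairC_ok. apply cst_ok. apply (IHp (S d)).
Qed.

Definition numcP := rPrec (cst (npair 1 (npair 0 0)))
  (pairC (cst 1) (pairC (cst 1) (enc2 (rProj 1) (cst (npair 1 (npair 0 0)))))).
Lemma numcP_ok m xs : reval numcP (m :: xs) (tcode (tt (num m))).
Proof.
  induction m.
  - apply ev_prec0. apply cst_ok.
  - eapply ev_precS. exact IHm.
    apply pairC_ok. apply cst_ok. apply pairC_ok. apply cst_ok. apply enc2_ok. apply (ev_proj 1 (m :: _ :: xs)). apply cst_ok.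
Qed.

Opaque tcons tconc te.

Lemma tb_subst t : forall m n (s : nat -> tm), tbounded SeqSig m t -> (forall i, i < m -> tbounded SeqSig n (s i)) ->
  tbounded SeqSig n (tsubst s t).
Proof. induction t using term_ind'; simpl; intros; eauto. Qed.
Lemma tb_liftn n k t : tbounded SeqSig n t -> tbounded SeqSig (n + k) (liftn k t).
Proof. intro H. eapply tb_subst; eauto. intros i Hi. simpl. lia. Qed.
Lemma tb_tt n c : tbounded SeqSig n (tt c).
Proof. induction c; simpl; auto using tb_e, tb_cons. Qed.
Lemma tb_pt m p : (forall i, In i (pvars p) -> i < m) -> tbounded SeqSig m (pt p).
Proof.
  induction p; simpl; intros H. apply tb_e. apply tb_cons; [apply IHp1|apply IHp2]; intros; apply H; apply in_or_app; auto.
  apply H; auto.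
Qed.
Lemma fb_exn k : forall n p, fbounded (n + k) p -> fbounded n (exn k p).
Proof.
  induction k; intros n p H; simpl. rewrite Nat.add_0_r in H; auto.
  apply IHk. simpl. rewrite <- plus_n_Sm in H. auto.
Qed.
Lemma fb_fand n p q : fbounded n p -> fbounded n q -> @fbounded SeqSig n (fand p q).
Proof. simpl; auto. Qed.
Lemma fb_Disj n ps : (forall p, In p ps -> fbounded n p) -> fbounded n (Disj ps).
Proof. induction ps; simpl; intros; auto; repeat split; auto. Qed.
Lemma fb_StepF n rs b a : forallb wfr rs = true -> tbounded SeqSig n b -> tbounded SeqSig n a -> fbounded n (StepF rs b a).
Proof.
  intros Hw Hb Ha. apply fb_Disj. intros p Hp. apply in_map_iff in Hp. destruct Hp as [r [<- Hr]].
  rewrite forallb_forall in Hw. destruct (wfr_spec r (Hw r Hr)) as [_ [A B]].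
  unfold ruleF. apply fb_exn. apply fb_fand; split; try apply tb_liftn; auto; apply tb_pt; intros i Hi.
  specialize (A i Hi); lia. specialize (A i (B i Hi)); lia.
Qed.
Lemma fb_Valid n rs X : forallb wfr rs = true -> tbounded SeqSig n X -> fbounded n (Valid rs X).
Proof.
  intros Hw H. unfold Valid. simpl. split. split.
  - replace (S (S (S (S n)))) with (n + 4) by lia. apply tb_liftn; auto.
  - apply tb_conc; [apply tb_cons; [apply tb_cons|]|]; simpl; lia.
  - apply fb_StepF; auto; simpl; lia.
Qed.
Lemma fb_Bot n H X : tbounded SeqSig n X -> fbounded n (Bot H X).
Proof.
  intros HX. unfold Bot. simpl. split. split.
  - replace (S (S n)) with (n + 2) by lia. apply tb_liftn; auto.
  - apply tb_conc; [apply tb_cons; [apply tb_e|]|]; simpl; lia.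
  - split. simpl; lia. apply tb_tt.
Qed.
Lemma fb_Phi n rs H I : forallb wfr rs = true -> tbounded SeqSig n I -> fbounded n (Phi rs H I).
Proof.
  intros Hw HI.
  assert (HX : tbounded SeqSig (S n) (tcons (tvar 0) (liftn 1 I))).
  { apply tb_cons. simpl; lia. replace (S n) with (n + 1) by lia. apply tb_liftn; auto. }
  assert (A := fb_Valid (S n) rs _ Hw HX). assert (B := fb_Bot (S n) H _ HX).
  unfold Phi, fex, fand, fneg. cbn [fbounded]. tauto.
Qed.

(* ---------- the diagonal sentence ---------- *)
Definition I0 : tm := tcons (tt (num 4)) (tcons (tvar 0) (tcons (tt (num 7)) (tvar 0))).
Definition Phi0 := Phi rules H0t I0.
Definition phi (m : nat) := fsubst (ins (tt (num m))) Phi0.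

Lemma phi_eq m : phi m = Phi rules H0t (tt (init m)).
Proof.
  unfold phi, Phi0. rewrite fsubst_Phi by (apply rules_good). f_equal.
  unfold I0. rewrite !ts_cons, !tt_subst. reflexivity.
Qed.

Lemma phi_sentence m : sentence (phi m).
Proof. rewrite phi_eq. unfold sentence. apply fb_Phi. apply rules_good. apply tb_tt. Qed.

Definition Gprog := cF 0 numcP Phi0.
Lemma Gprog_ok m : reval Gprog [m] (fcode (phi m)).
Proof. unfold Gprog, phi. apply (cF_ok numcP (num m) [m] Phi0 (numcP_ok m []) 0). Qed.

Lemma cut_list A : forall G q, pr (A ++ G) q -> (forall a, In a A -> pr G a) -> pr G q.
Proof.
  induction A; simpl; intros G q H HA; auto.
  apply (P_impE _ _ a q). apply IHA. apply P_impI. exact H. intros; apply HA; auto. apply HA; auto.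
Qed.

Lemma proves_Ax (T : theory SeqSig) q : (forall p, SeqAx p -> proves T p) -> pr Ax q -> proves T q.
Proof.
  intros HT H.
  assert (E : exists G, (forall x, In x G -> T x) /\ forall a, In a Ax -> pr G a).
  { assert (Hs : forall l, incl l Ax -> exists G, (forall x, In x G -> T x) /\ forall a, In a l -> pr G a).
    { induction l; intros Hl. exists []; split; intros; [destruct H0|destruct H0].
      destruct IHl as [G [HG1 HG2]]. intros x Hx; apply Hl; right; auto.
      assert (SeqAx a) by (assert (Ha : In a Ax) by (apply Hl; left; auto); simpl in Ha; unfold SeqAx;
        destruct Ha as [<-|[<-|[<-|[<-|[<-|[]]]]]]; tauto).
      destruct (HT a H0) as [G' [HG'1 HG'2]]. exists (G ++ G'). split.
      intros x Hx; apply in_app_or in Hx; destruct Hx; auto.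
      intros b [<-|Hb]. eapply weaken; eauto. intros y Hy; apply in_or_app; auto.
      eapply weaken; eauto. intros y Hy; apply in_or_app; auto. }
    apply Hs. intros x; auto. }
  destruct E as [G [HG1 HG2]]. exists G. split; auto. apply cut_list with (A := Ax); auto.
  eapply weaken; eauto. intros x Hx; apply in_or_app; auto.
Qed.

Lemma proves_contra (T : theory SeqSig) p : proves T p -> proves T (fneg p) -> proves T fbot.
Proof.
  intros [G1 [A1 B1]] [G2 [A2 B2]]. exists (G1 ++ G2). split.
  intros x Hx; apply in_app_or in Hx; destruct Hx; auto.
  eapply P_impE; eapply weaken; eauto; intros y Hy; apply in_or_app; auto.
Qed.

Lemma AxG_Ax : AxG Ax.
Proof. intros x Hx; auto. Qed.

Theorem part2 : essentially_undecidable SeqAx.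
Proof.
  intros T HTs HT0 Hcons [c Hc].
  set (q := rComp c [Gprog]). set (m := etree (Tp q)).
  destruct (Hc (phi m) (phi_sentence m)) as [H1 H2].
  assert (Hq : forall y, reval c [fcode (phi m)] y -> steps rules (init m) (Rt (num y) L)).
  { intros y Hy. apply run. eapply comp1. apply Gprog_ok. exact Hy. }
  destruct (classic (proves T (phi m))) as [Hp|Hn].
  - apply H1 in Hp as Hr. apply Hq in Hr. destruct (steps_chain _ _ _ Hr) as [l [Hch Hl]].
    apply Hcons. apply proves_contra with (phi m); auto. apply (proves_Ax T); auto.
    rewrite phi_eq. apply B_case with (l' := l); auto using AxG_Ax, rules_good.
    + rewrite Hl. apply H1_halt.
    + intros d Hd E. subst d. destruct (tree_eq_dec H0t (last (init m :: l) L)).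
      * rewrite Hl in e. discriminate.
      * apply (chain_nonhalt _ _ Hch H0t Hd n). apply H0_halt.
  - apply H2 in Hn as Hr. apply Hq in Hr. destruct (steps_chain _ _ _ Hr) as [l [Hch Hl]].
    apply Hn. apply (proves_Ax T); auto. rewrite phi_eq. apply A_case with (l' := l); auto using AxG_Ax, rules_good.
Qed.

Transparent tcons tconc te.

Definition Mem (x y : tm) : fm :=
  fex (fex (feq (liftn 2 y) (tconc (tcons (tvar 1) (liftn 2 x)) (tvar 0)))).

Definition delta : fm := fex (fex (feq (tvar 3) (tconc (tcons (tvar 1) (tvar 2)) (tvar 0)))).

Lemma tr_mem a b : tr delta (mem a b) = fsubst (fun n => match n with 0 => tvar a | 1 => tvar b | _ => tvar 0 end) delta.
Proof. reflexivity. Qed.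

Opaque tcons tconc te.

Lemma tr_mem' a b : tr delta (mem a b) = Mem (tvar a) (tvar b).
Proof.
  rewrite tr_mem. unfold delta, Mem. change (fsubst ?s (fex (fex ?B))) with (fex (fex (fsubst (upn 2 s) B))). cbn [fsubst].
  rewrite ts_conc, ts_cons. unfold liftn, lk. simpl.
  replace (b + 2) with (S (S b)) by lia. replace (a + 2) with (S (S a)) by lia. reflexivity.
Qed.

Lemma tr_empty : tr delta AST_empty = fex (fall (fneg (Mem (tvar 0) (tvar 1)))).
Proof. change (tr delta AST_empty) with (fex (fall (fneg (tr delta (mem 0 1))))). rewrite tr_mem'. reflexivity. Qed.
Lemma tr_adj : tr delta AST_adj =
  fall (fall (fex (fall (fiff (Mem (tvar 0) (tvar 1)) (for_ (Mem (tvar 0) (tvar 3)) (feq (tvar 0) (tvar 2))))))).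
Proof.
  change (tr delta AST_adj) with
    (fall (fall (fex (fall (fiff (tr delta (mem 0 1)) (for_ (tr delta (mem 0 3)) (feq (tvar 0) (tvar 2)))))))).
  rewrite !tr_mem'. reflexivity.
Qed.

Lemma fsubst_Mem s x y : fsubst s (Mem x y) = Mem (tsubst s x) (tsubst s y).
Proof.
  unfold Mem. change (fsubst s (fex (fex ?B))) with (fex (fex (fsubst (upn 2 s) B))). cbn [fsubst].
  rewrite ts_conc, ts_cons, !liftn_subst, !ts_var, !upn_lt by lia. reflexivity.
Qed.

Lemma MemI G x y a w : pr G (feq y (tconc (tcons a x) w)) -> pr G (Mem x y).
Proof.
  intro H. apply pr_id. unfold Mem. apply (exI' _ _ _ a). apply (exI' _ _ _ w). cbn [fsubst].
  rewrite ts_conc, ts_cons. unfold liftn. rewrite !tsubst_comp. simpl.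
  assert (E : forall t, tsubst (fun n : nat => scons w (scons a tvar) (n + 2)) t = t).
  { intro t. rewrite <- (tsubst_id t) at 2. apply tsubst_ext. intro n. replace (n + 2) with (S (S n)) by lia. reflexivity. }
  rewrite !E. exact H.
Qed.

Lemma MemE G x y r : pr G (Mem x y) ->
  pr (feq (liftn 2 y) (tconc (tcons (tvar 1) (liftn 2 x)) (tvar 0)) :: lift2 G) (fsubst sh (fsubst sh r)) -> pr G r.
Proof.
  intros H1 H2. eapply exE. exact H1. eapply exE. apply ax0.
  eapply weaken. exact H2. unfold lift2. inc.
Qed.

Lemma liftn2_sh2 t : liftn 2 t = sh2 t.
Proof. unfold liftn, sh2. rewrite tsubst_comp. apply tsubst_ext. intro n. unfold lk. simpl. unfold shift. f_equal. lia. Qed.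

Definition sh4 t := sh2 (sh2 t).

Lemma adj_fact G u x y : AxG G -> pr G (fiff (Mem u (tcons x y)) (for_ (Mem u x) (feq u y))).
Proof.
  intro HG. unfold fiff. apply andI; apply P_impI.
  - eapply MemE. apply ax0. rewrite !liftn2_sh2. unfold sh2. rewrite !ts_cons. fold (sh2 x) (sh2 y) (sh2 u).
    change (fsubst sh (fsubst sh (for_ ?p ?q))) with (for_ (fsubst sh (fsubst sh p)) (fsubst sh (fsubst sh q))).
    rewrite !fsubst_Mem. cbn [fsubst]. fold (sh2 x) (sh2 y) (sh2 u).
    set (F := feq (tcons (sh2 x) (sh2 y)) (tconc (tcons (tvar 1) (sh2 u)) (tvar 0))).
    set (G2 := F :: lift2 (Mem u (tcons x y) :: G)).
    assert (HG2 : AxG G2) by (apply AxG_cons, AxG_lift2, AxG_cons; auto).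
    eapply S5E with (w := tvar 0). exact HG2.
    + apply orI2.
      assert (X : pr (feq (tvar 0) te :: G2) (feq (tcons (sh2 x) (sh2 y)) (tcons (tvar 1) (sh2 u)))).
      { eapply eq_trans. apply wk1, ax0. eapply eq_trans. apply cong_conc. apply eq_refl'. apply ax0.
        apply S3. apply AxG_cons; auto. }
      apply S2 in X; [|apply AxG_cons; auto]. destruct X as [_ X]. apply eq_sym. exact X.
    + change (fsubst sh (fsubst sh (for_ ?p ?q))) with (for_ (fsubst sh (fsubst sh p)) (fsubst sh (fsubst sh q))).
      apply orI1. rewrite !fsubst_Mem. fold (sh2 (sh2 u)) (sh2 (sh2 x)).
      set (G3 := _ :: lift2 G2). assert (HG3 : AxG G3) by (apply AxG_cons, AxG_lift2; auto).
      assert (Y := ax G3 (fsubst sh (fsubst sh F)) ltac:(unfold G3, G2, lift2; simpl; tauto)).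
      unfold F in Y. cbn [fsubst] in Y. rewrite !ts_conc, !ts_cons in Y.
      change (tsubst sh (tsubst sh (tvar 1))) with (@tvar SeqSig 3) in Y.
      change (tsubst sh (tsubst sh (tvar 0))) with (@tvar SeqSig 2) in Y. fold (sh2 (sh2 x)) (sh2 (sh2 y)) (sh2 (sh2 u)) in Y.
      assert (X : pr G3 (feq (tcons (sh2 (sh2 x)) (sh2 (sh2 y))) (tcons (tconc (tcons (tvar 3) (sh2 (sh2 u))) (tvar 1)) (tvar 0)))).
      { eapply eq_trans. exact Y. eapply eq_trans. apply cong_conc. apply eq_refl'. apply ax0. apply S4; auto. }
      change (sh2 (tvar 0)) with (@tvar SeqSig 2) in G3.
      apply S2 in X; auto. destruct X as [X _]. eapply MemI. exact X.
  - eapply orE. apply ax0.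
    + eapply MemE. apply ax0. rewrite !liftn2_sh2. rewrite !fsubst_Mem. rewrite !ts_cons. fold (sh2 x) (sh2 y) (sh2 u).
      set (G2 := _ :: lift2 _). assert (HG2 : AxG G2) by (apply AxG_cons, AxG_lift2, AxG_cons, AxG_cons; auto).
      eapply MemI with (a := tvar 1) (w := tcons (tvar 0) (sh2 y)).
      eapply eq_trans. apply cong_cons. apply ax0. apply eq_refl'.
      apply eq_sym. apply S4; auto.
    + eapply MemI with (a := x) (w := te). eapply eq_trans. 2: apply eq_sym, S3; apply AxG_cons, AxG_cons; auto.
      apply cong_cons. apply eq_refl'. apply eq_sym, ax0.
Qed.

Theorem part1 : sequential SeqAx.
Proof.
  exists delta. split.
  - unfold delta, fex, fneg. simpl. repeat split; repeat (apply tb_conc || apply tb_cons); simpl; lia.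
  - assert (HT : forall p, SeqAx p -> proves SeqAx p).
    { intros p Hp. exists (cons p nil). split. intros q Hq; destruct Hq as [<-|[]]; auto. apply ax0. }
    intros A HA; destruct HA as [ HA | HA ]; subst A; apply proves_Ax; auto.
    + rewrite tr_empty. apply (exI _ _ te).
      change (fsubst (ins te) (fall (fneg ?p))) with (fall (fneg (fsubst (upp (ins te)) p))).
      rewrite fsubst_Mem. simpl. rewrite ts_e.
      apply P_allI. apply P_impI. eapply MemE. apply ax0. cbn [fsubst].
      eapply prefix with (l := []) (w := tvar 0) (s1 := tvar 1) (s2 := liftn 2 (tvar 0)).
      * apply AxG_cons, AxG_lift2, AxG_cons, AxG_map, AxG_Ax.
      * apply eq_sym. unfold liftn at 1. rewrite ts_e. apply ax0.
      * intros pre l' E Hne. destruct pre; destruct l'; simpl in E; congruence.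
    + rewrite tr_adj. apply P_allI, P_allI. apply (exI _ _ (tcons (tvar 1) (tvar 0))).
      match goal with |- pr _ ?g => assert (E : g = fall (fiff (Mem (tvar 0) (tcons (tvar 2) (tvar 1))) (for_ (Mem (tvar 0) (tvar 2)) (feq (tvar 0) (tvar 1))))) end.
      { change (fsubst ?s (fall (fiff ?A (for_ ?B ?C)))) with
          (fall (fiff (fsubst (upp s) A) (for_ (fsubst (upp s) B) (fsubst (upp s) C)))).
        rewrite !fsubst_Mem. cbn [fsubst up inst tsubst shift]. rewrite ts_cons. reflexivity. }
      rewrite E. apply P_allI. apply adj_fact. repeat apply AxG_map. apply AxG_Ax.
Qed.


Theorem theorem4 : sequential SeqAx /\ essentially_undecidable SeqAx.
Proof. split; [apply part1 | apply part2]. Qed.
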